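(* Let $D$ be a directed graph with vertex set $I$, $A=kD$ its path algebra over a field $k$, and let $r$ be any one of $r_b,r_k,r_l,r_j$. The following are equivalent: (i) every weak component of $D$ is a strong component; (ii) every unilateral component of $D$ is a strong component; (iii) the weak components, unilateral components and strong components of $D$ coincide; (iv) $D$ is the union of its strong components (every arrow lies in some strong component); (v) $D$ has no regular path; (vi) for all $i,j\in I$, $A_{ij}=0$ if and only if $A_{ji}=0$; (vii) $A$ is a direct sum of prime algebras; (viii) $A$ is semiprime; (ix) for all $i,j\in I$, $A_{ij}$ is a semiprime $A_{ji}$-ring; (x) $r(A_{ij})=0$ for all $i,j\in I$; (xi) $r(A)=0$.
   Context: The path algebra $kD=\bigoplus_{i,j\in I}A_{ij}$ with $A_{ij}$ the span of paths from $i$ to $j$ of length $\ge1$, plus the trivial path $e_{ii}$ if $i=j$; multiplication is concatenation. A weak component is a maximal subgraph whose underlying undirected graph is connected; a unilateral component is a maximal subgraph in which for any two vertices $u,v$ there is a path from $u$ to $v$ or from $v$ to $u$; a strong component is a maximal subgraph in which for any two vertices there are paths in both directions. A regular path is a path of length $\ge1$ from $i$ to $j$ such that there is no path from $j$ to $i$. An algebra is prime if $xAy=0$ implies $x=0$ or $y=0$, and semiprime if $xAx=0$ implies $x=0$. $A_{ij}$ is regarded as a $\Gamma$-ring with $\Gamma=A_{ji}$; it is semiprime if $xA_{ji}A_{ij}A_{ji}x=0$ with $x\in A_{ij}$ implies $x=0$. $r(A)$ is the ring radical ($r_b$ Baer, $r_k$ nil, $r_l$ Levitzki, $r_j$ Jacobson)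 and $r(A_{ij})$ the corresponding $\Gamma$-ring radical (Coppage–Luh). *)

(* Defs.v *)
From HB Require Import structures.
From mathcomp Require Import all_boot all_order all_algebra.
From Stdlib Require Import Relations.
From Stdlib Require List.

Set Implicit Arguments.
Unset Strict Implicit.
Unset Printing Implicit Defensive.
Import GRing.Theory.
Local Open Scope ring_scope.

Definition adj (I E : Type) (src tgt : E -> I) (u v : I) : Prop :=
  exists e, src e = u /\ tgt e = v.

Definition reach (I E : Type) (src tgt : E -> I) : relation I :=
  clos_refl_trans I (adj src tgt).

Record subgraph (I E : Type) := Subgraph { sg_v : I -> Prop; sg_e : E -> Prop }.

Definition is_subgraph (I E : Type) (src tgt : E -> I) (H : subgraph I E) :=
  forall e, sg_e H e -> sg_v H (src e) /\ sg_v H (tgt e).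

Definition sg_le (I E : Type) (H H' : subgraph I E) :=
  (forall v, sg_v H v -> sg_v H' v) /\ (forall e, sg_e H e -> sg_e H' e).

Definition adj_in (I E : Type) (src tgt : E -> I) (H : subgraph I E) (u v : I) :=
  exists e, sg_e H e /\ src e = u /\ tgt e = v.

Definition weakly_connected (I E : Type) (src tgt : E -> I) (H : subgraph I E) :=
  forall u v, sg_v H u -> sg_v H v -> clos_refl_sym_trans I (adj_in src tgt H) u v.

Definition unilaterally_connected (I E : Type) (src tgt : E -> I) (H : subgraph I E) :=
  forall u v, sg_v H u -> sg_v H v ->
    clos_refl_trans I (adj_in src tgt H) u v \/ clos_refl_trans I (adj_in src tgt H) v u.

Definition strongly_connected (I E : Type) (src tgt : E -> I) (H : subgraph I E) :=
  forall u v, sg_v H u -> sg_v H v ->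
    clos_refl_trans I (adj_in src tgt H) u v /\ clos_refl_trans I (adj_in src tgt H) v u.

Definition maximal_subgraph (I E : Type) (src tgt : E -> I)
  (P : subgraph I E -> Prop) (H : subgraph I E) :=
  is_subgraph src tgt H /\ P H /\
  forall H', is_subgraph src tgt H' -> P H' -> sg_le H H' -> sg_le H' H.

Definition weak_component (I E : Type) (src tgt : E -> I) :=
  maximal_subgraph src tgt (weakly_connected src tgt).
Definition unilateral_component (I E : Type) (src tgt : E -> I) :=
  maximal_subgraph src tgt (unilaterally_connected src tgt).
Definition strong_component (I E : Type) (src tgt : E -> I) :=
  maximal_subgraph src tgt (strongly_connected src tgt).

(* paths as a start vertex plus a list of composable arrows *)
Fixpoint is_walk (I E : Type) (src tgt : E -> I) (v : I) (l : seq E) : Prop :=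
  match l with
  | [::] => True
  | e :: l' => src e = v /\ is_walk src tgt (tgt e) l'
  end.

Fixpoint walk_end (I E : Type) (tgt : E -> I) (v : I) (l : seq E) : I :=
  match l with
  | [::] => v
  | e :: l' => walk_end tgt (tgt e) l'
  end.

Definition has_regular_path (I E : Type) (src tgt : E -> I) :=
  exists i j (l : seq E), is_walk src tgt i l /\ l <> [::] /\
    walk_end tgt i l = j /\ ~ reach src tgt j i.

(* Generic notions for (possibly non-unital) rings, given as a carrier *)
(* predicate R on a type T with operations.                            *)

Definition r_subgroup (T : Type) (R : T -> Prop) (zero : T) (add : T -> T -> T)
  (opp : T -> T) (U : T -> Prop) :=
  (forall x, U x -> R x) /\ U zero /\ (forall x y, U x -> U y -> U (add x y)) /\
  (forall x, U x -> U (opp x)).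

Definition r_right_ideal (T : Type) (R : T -> Prop) (zero : T) (add : T -> T -> T)
  (opp : T -> T) (mul : T -> T -> T) (U : T -> Prop) :=
  r_subgroup R zero add opp U /\ forall x a, U x -> R a -> U (mul x a).

Definition r_ideal (T : Type) (R : T -> Prop) (zero : T) (add : T -> T -> T)
  (opp : T -> T) (mul : T -> T -> T) (U : T -> Prop) :=
  r_right_ideal R zero add opp mul U /\ forall x a, U x -> R a -> U (mul a x).

Definition r_prime_ideal (T : Type) (R : T -> Prop) (zero : T) (add : T -> T -> T)
  (opp : T -> T) (mul : T -> T -> T) (P : T -> Prop) :=
  r_ideal R zero add opp mul P /\ (exists a, R a /\ ~ P a) /\
  forall U V, r_ideal R zero add opp mul U -> r_ideal R zero add opp mul V ->
    (forall u v, U u -> V v -> P (mul u v)) ->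
    (forall u, U u -> P u) \/ (forall v, V v -> P v).

Definition r_prime (T : Type) (R : T -> Prop) (zero : T) (mul : T -> T -> T) :=
  forall x y, R x -> R y -> (forall a, R a -> mul (mul x a) y = zero) ->
    x = zero \/ y = zero.

Definition r_semiprime (T : Type) (R : T -> Prop) (zero : T) (mul : T -> T -> T) :=
  forall x, R x -> (forall a, R a -> mul (mul x a) x = zero) -> x = zero.

Fixpoint rprod (T : Type) (mul : T -> T -> T) (x : T) (s : seq T) : T :=
  match s with
  | [::] => x
  | y :: s' => mul x (rprod mul y s')
  end.

Definition r_nilpotent_set (T : Type) (zero : T) (mul : T -> T -> T) (F : seq T) :=
  exists n : nat, forall x (s : seq T), List.In x F -> size s = n ->
    (forall y, List.In y s -> List.In y F) -> rprod mul x s = zero.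

(* Baer (prime) radical = intersection of the prime ideals *)
Definition r_baer_zero (T : Type) (R : T -> Prop) (zero : T) (add : T -> T -> T)
  (opp : T -> T) (mul : T -> T -> T) :=
  forall x, R x -> (forall P, r_prime_ideal R zero add opp mul P -> P x) -> x = zero.

(* upper nil (Koethe) radical = sum of nil ideals *)
Definition r_nil_zero (T : Type) (R : T -> Prop) (zero : T) (add : T -> T -> T)
  (opp : T -> T) (mul : T -> T -> T) :=
  forall U, r_ideal R zero add opp mul U ->
    (forall x, U x -> r_nilpotent_set zero mul [:: x]) ->
    forall x, U x -> x = zero.

(* Levitzki radical = sum of locally nilpotent ideals *)
Definition r_levitzki_zero (T : Type) (R : T -> Prop) (zero : T) (add : T -> T -> T)
  (opp : T -> T) (mul : T -> T -> T) :=
  forall U, r_ideal R zero add opp mul U ->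
    (forall F : seq T, (forall x, List.In x F -> U x) -> r_nilpotent_set zero mul F) ->
    forall x, U x -> x = zero.

Definition r_rqr (T : Type) (R : T -> Prop) (zero : T) (add : T -> T -> T)
  (mul : T -> T -> T) (x : T) :=
  exists y, R y /\ add (add x y) (mul x y) = zero.

(* Jacobson radical = sum of the right quasi-regular right ideals *)
Definition r_jacobson_zero (T : Type) (R : T -> Prop) (zero : T) (add : T -> T -> T)
  (opp : T -> T) (mul : T -> T -> T) :=
  forall U, r_right_ideal R zero add opp mul U ->
    (forall x, U x -> r_rqr R zero add mul x) -> forall x, U x -> x = zero.

Inductive radical_kind := rad_b | rad_k | rad_l | rad_j.

Definition ring_radical_zero (rk : radical_kind) (T : Type) (R : T -> Prop) (zero : T)
  (add : T -> T -> T) (opp : T -> T) (mul : T -> T -> T) : Prop :=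
  match rk with
  | rad_b => r_baer_zero R zero add opp mul
  | rad_k => r_nil_zero R zero add opp mul
  | rad_l => r_levitzki_zero R zero add opp mul
  | rad_j => r_jacobson_zero R zero add opp mul
  end.

(* Gamma-rings (Barnes / Coppage--Luh): M, Gamma carriers in T, with   *)
(* the ternary product gmul x g y = "x g y" in M.                      *)

Definition g_right_ideal (T : Type) (M G : T -> Prop) (zero : T) (add : T -> T -> T)
  (opp : T -> T) (gmul : T -> T -> T -> T) (U : T -> Prop) :=
  r_subgroup M zero add opp U /\
  forall x g a, U x -> G g -> M a -> U (gmul x g a).

Definition g_ideal (T : Type) (M G : T -> Prop) (zero : T) (add : T -> T -> T)
  (opp : T -> T) (gmul : T -> T -> T -> T) (U : T -> Prop) :=
  g_right_ideal M G zero add opp gmul U /\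
  forall x g a, U x -> G g -> M a -> U (gmul a g x).

Definition g_prime_ideal (T : Type) (M G : T -> Prop) (zero : T) (add : T -> T -> T)
  (opp : T -> T) (gmul : T -> T -> T -> T) (P : T -> Prop) :=
  g_ideal M G zero add opp gmul P /\ (exists a, M a /\ ~ P a) /\
  forall U V, g_ideal M G zero add opp gmul U -> g_ideal M G zero add opp gmul V ->
    (forall u g v, U u -> G g -> V v -> P (gmul u g v)) ->
    (forall u, U u -> P u) \/ (forall v, V v -> P v).

Fixpoint gprod (T : Type) (gmul : T -> T -> T -> T) (x : T) (s : seq (T * T)) : T :=
  match s with
  | [::] => x
  | (g, y) :: s' => gmul x g (gprod gmul y s')
  end.

Definition g_nilpotent_set (T : Type) (G : T -> Prop) (zero : T)
  (gmul : T -> T -> T -> T) (F : seq T) :=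
  exists n : nat, forall x (s : seq (T * T)), List.In x F -> size s = n ->
    (forall p, List.In p s -> G p.1 /\ List.In p.2 F) -> gprod gmul x s = zero.

Definition g_baer_zero (T : Type) (M G : T -> Prop) (zero : T) (add : T -> T -> T)
  (opp : T -> T) (gmul : T -> T -> T -> T) :=
  forall x, M x -> (forall P, g_prime_ideal M G zero add opp gmul P -> P x) -> x = zero.

Definition g_nil_zero (T : Type) (M G : T -> Prop) (zero : T) (add : T -> T -> T)
  (opp : T -> T) (gmul : T -> T -> T -> T) :=
  forall U, g_ideal M G zero add opp gmul U ->
    (forall x, U x -> g_nilpotent_set G zero gmul [:: x]) ->
    forall x, U x -> x = zero.

Definition g_levitzki_zero (T : Type) (M G : T -> Prop) (zero : T) (add : T -> T -> T)
  (opp : T -> T) (gmul : T -> T -> T -> T) :=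
  forall U, g_ideal M G zero add opp gmul U ->
    (forall F : seq T, (forall x, List.In x F -> U x) -> g_nilpotent_set G zero gmul F) ->
    forall x, U x -> x = zero.

Definition tsum (T : Type) (zero : T) (add : T -> T -> T) (s : seq T) : T :=
  foldr add zero s.

(* Coppage--Luh: a is r.q.r. if for every g in Gamma there are x_i in M,
   d_i in Gamma with  a g b + sum x_i d_i b - sum a g x_i d_i b = 0  for all b in M *)
Definition g_rqr (T : Type) (M G : T -> Prop) (zero : T) (add : T -> T -> T)
  (opp : T -> T) (gmul : T -> T -> T -> T) (a : T) :=
  forall g, G g -> exists s : seq (T * T),
    (forall p, List.In p s -> M p.1 /\ G p.2) /\
    forall b, M b ->
      add (add (gmul a g b) (tsum zero add (map (fun p => gmul p.1 p.2 b) s)))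
          (opp (tsum zero add (map (fun p => gmul (gmul a g p.1) p.2 b) s))) = zero.

Definition g_jacobson_zero (T : Type) (M G : T -> Prop) (zero : T) (add : T -> T -> T)
  (opp : T -> T) (gmul : T -> T -> T -> T) :=
  forall U, g_right_ideal M G zero add opp gmul U ->
    (forall x, U x -> g_rqr M G zero add opp gmul x) -> forall x, U x -> x = zero.

Definition gamma_radical_zero (rk : radical_kind) (T : Type) (M G : T -> Prop) (zero : T)
  (add : T -> T -> T) (opp : T -> T) (gmul : T -> T -> T -> T) : Prop :=
  match rk with
  | rad_b => g_baer_zero M G zero add opp gmul
  | rad_k => g_nil_zero M G zero add opp gmul
  | rad_l => g_levitzki_zero M G zero add opp gmul
  | rad_j => g_jacobson_zero M G zero add opp gmul
  end.

Definition g_semiprime (T : Type) (M G : T -> Prop) (zero : T) (gmul : T -> T -> T -> T) :=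
  forall x, M x ->
    (forall g a d, G g -> M a -> G d -> gmul (gmul x g a) d x = zero) -> x = zero.

(* The path algebra kD: finitely supported k-valued functions on paths *)
(* (v, l) (start vertex, composable list of arrows); product is        *)
(* concatenation, i.e. convolution over the splittings of a path.      *)

Definition pa_T (k : fieldType) (I E : Type) := I -> seq E -> k.

Definition pa_zero (k : fieldType) (I E : Type) : pa_T k I E := fun _ _ => 0.
Definition pa_add (k : fieldType) (I E : Type) (f g : pa_T k I E) : pa_T k I E :=
  fun v l => f v l + g v l.
Definition pa_opp (k : fieldType) (I E : Type) (f : pa_T k I E) : pa_T k I E :=
  fun v l => - f v l.
Definition pa_scal (k : fieldType) (I E : Type) (c : k) (f : pa_T k I E) : pa_T k I E :=
  fun v l => c * f v l.
Definition pa_mul (k : fieldType) (I E : Type) (tgt : E -> I) (f g : pa_T k I E)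
  : pa_T k I E :=
  fun v l => \sum_(m < (size l).+1)
               f v (take m l) * g (walk_end tgt v (take m l)) (drop m l).

Definition in_kD (k : fieldType) (I E : Type) (src tgt : E -> I) (f : pa_T k I E) :=
  (forall v l, ~ is_walk src tgt v l -> f v l = 0) /\
  exists s : seq (I * seq E), forall v l, f v l <> 0 -> List.In (v, l) s.

(* A_ij : span of the paths from i to j (including e_ii when i = j) *)
Definition A_sub (k : fieldType) (I E : Type) (src tgt : E -> I) (i j : I)
  (f : pa_T k I E) :=
  in_kD src tgt f /\ forall v l, f v l <> 0 -> v = i /\ walk_end tgt v l = j.

(* gamma product on the Gamma-ring A_ij with Gamma = A_ji *)
Definition pa_gmul (k : fieldType) (I E : Type) (tgt : E -> I) (x g y : pa_T k I E) :=
  pa_mul tgt (pa_mul tgt x g) y.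

(* kD is an (internal) direct sum of prime algebras: a family of ideals
   (closed under scalars, i.e. subalgebras) that are prime algebras,
   generate kD, and are independent. *)
Definition pa_direct_sum_of_primes (k : fieldType) (I E : Type) (src tgt : E -> I) :=
  exists (J : Type) (B : J -> pa_T k I E -> Prop),
    (forall j, r_ideal (in_kD src tgt) (@pa_zero k I E) (@pa_add k I E) (@pa_opp k I E)
                  (pa_mul tgt) (B j) /\
               forall c x, B j x -> B j (pa_scal c x)) /\
    (forall j, r_prime (B j) (@pa_zero k I E) (pa_mul tgt)) /\
    (forall x, in_kD src tgt x -> exists s : seq (J * pa_T k I E),
        (forall p, List.In p s -> B p.1 p.2) /\
        x = tsum (@pa_zero k I E) (@pa_add k I E) (map snd s)) /\
    (forall j x (s : seq (J * pa_T k I E)), B j x ->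
        (forall p, List.In p s -> p.1 <> j /\ B p.1 p.2) ->
        x = tsum (@pa_zero k I E) (@pa_add k I E) (map snd s) -> x = @pa_zero k I E).

(* Main.v *)
Require Import Defs.
From HB Require Import structures.
From mathcomp Require Import all_boot all_order all_algebra.
From Stdlib Require Import Relations.
From Stdlib Require List.
From mathcomp Require Import zify ring.
From mathcomp Require classical_sets.
From Stdlib Require Import Lia FunctionalExtensionality ClassicalEpsilon Classical PropExtensionality.
Set Implicit Arguments.
Unset Strict Implicit.
Unset Printing Implicit Defensive.
Import GRing.Theory.

Lemma sum_shift (R : nmodType) (n s : nat) (G : nat -> R) : (s <= n)%N ->
  (\sum_(r < (n - s).+1) G r = \sum_(t < n.+1) (if (s <= t)%N then G (t - s)%N else 0))%R.
Proof.
move=> sn.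
rewrite -(big_mkord xpredT G) -(big_mkord xpredT (fun t => if (s<=t)%N then G (t-s)%N else 0%R)).
rewrite [in RHS](@big_cat_nat _ _ _ s 0 n.+1) //=; last by rewrite ltnW.
have -> : (\sum_(0 <= i < s) (if (s <= i)%N then G (i - s)%N else 0) = 0)%R.
  apply: big1_seq => i /=; rewrite mem_index_iota => /andP[_ ].
  by rewrite ltnNge => /negbTE ->.
rewrite add0r -{2}(add0n s) big_addn.
have -> : (n.+1 - s = (n - s).+1)%N by rewrite subSn.
by apply: eq_big_nat => i _; rewrite leq_addl addnK.
Qed.

Section PA.
Variables (k : fieldType) (I E : Type) (src tgt : E -> I).
Local Notation T := (pa_T k I E).
Local Notation mul := (pa_mul tgt).
Local Notation zero := (@pa_zero k I E).
Local Notation add := (@pa_add k I E).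
Local Notation opp := (@pa_opp k I E).
Local Notation wend := (walk_end tgt).
Local Notation kD := (@in_kD k I E src tgt).
Local Notation Asub i j := (@A_sub k I E src tgt i j).
Local Open Scope ring_scope.

Lemma pa_ext (f g : T) : (forall v l, f v l = g v l) -> f = g.
Proof. move=> H; apply: functional_extensionality => v; apply: functional_extensionality => l; exact: H. Qed.

Lemma wend_cat v l1 l2 : wend v (l1 ++ l2) = wend (wend v l1) l2.
Proof. by elim: l1 v => [|e l1 IH] v //=. Qed.

Lemma walk_cat v l1 l2 : is_walk src tgt v (l1 ++ l2) <->
  is_walk src tgt v l1 /\ is_walk src tgt (wend v l1) l2.
Proof.
elim: l1 v => [|e l1 IH] v /=; first by tauto.
rewrite IH; tauto.
Qed.

Lemma mul_assoc (f g h : T) : mul (mul f g) h = mul f (mul g h).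
Proof.
apply: pa_ext => v l; rewrite /pa_mul.
set n := size l.
pose F (s t : nat) := f v (take s l) * g (wend v (take s l)) (take (t - s) (drop s l))
         * h (wend v (take t l)) (drop t l).
transitivity (\sum_(t < n.+1) \sum_(s < n.+1) (if (s <= t)%N then F s t else 0)).
  apply: eq_bigr => t _.
  have tn : (t <= n)%N by rewrite -ltnS.
  rewrite size_takel // mulr_suml.
  rewrite (big_ord_widen n.+1 (fun s : nat => f v (take s (take t l)) *
     g (wend v (take s (take t l))) (drop s (take t l)) * h (wend v (take t l)) (drop t l))) //.
  rewrite big_mkcond; apply: eq_bigr => s _; rewrite ltnS.
  case: ifP => // st; rewrite /F take_takel // take_drop subnK //.
rewrite exchange_big; apply: eq_bigr => s _.
have sn : (s <= n)%N by rewrite -ltnS.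
rewrite size_drop -/n (sum_shift (fun m => g (wend v (take s l)) (take m (drop s l)) *
     h (wend (wend v (take s l)) (take m (drop s l))) (drop m (drop s l))) sn).
rewrite mulr_sumr; apply: eq_bigr => t _.
case: ifP => st; last by rewrite mulr0.
rewrite /F mulrA -wend_cat -takeD subnKC // drop_drop subnK //.
Qed.


Lemma mulDl (f g h : T) : mul (add f g) h = add (mul f h) (mul g h).
Proof. apply: pa_ext => v l; rewrite /pa_mul /pa_add -big_split; apply: eq_bigr => t _; exact: mulrDl. Qed.

Lemma mulDr (f g h : T) : mul f (add g h) = add (mul f g) (mul f h).
Proof. apply: pa_ext => v l; rewrite /pa_mul /pa_add -big_split; apply: eq_bigr => t _; exact: mulrDr. Qed.

Lemma mul0l (f : T) : mul zero f = zero.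
Proof. apply: pa_ext => v l; rewrite /pa_mul /pa_zero; apply: big1 => t _; exact: mul0r. Qed.

Lemma mul0r' (f : T) : mul f zero = zero.
Proof. apply: pa_ext => v l; rewrite /pa_mul /pa_zero; apply: big1 => t _; exact: mulr0. Qed.

Lemma mulNl (f g : T) : mul (opp f) g = opp (mul f g).
Proof. apply: pa_ext => v l; rewrite /pa_mul /pa_opp -sumrN; apply: eq_bigr => t _; exact: mulNr. Qed.

Lemma mulNr' (f g : T) : mul f (opp g) = opp (mul f g).
Proof. apply: pa_ext => v l; rewrite /pa_mul /pa_opp -sumrN; apply: eq_bigr => t _; exact: mulrN. Qed.

Lemma mulZl c (f g : T) : mul (pa_scal c f) g = pa_scal c (mul f g).
Proof. apply: pa_ext => v l; rewrite /pa_mul /pa_scal mulr_sumr; apply: eq_bigr => t _; by rewrite mulrA. Qed.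

Lemma tsum_pt (s : seq T) v l : tsum zero add s v l = \sum_(x <- s) x v l.
Proof. elim: s => [|x s IH]; first by rewrite big_nil. by rewrite big_cons /= /pa_add -IH. Qed.

Lemma mul_tsuml (s : seq T) (h : T) :
  mul (tsum zero add s) h = tsum zero add (map (fun x => mul x h) s).
Proof. elim: s => [|x s IH] /=; first exact: mul0l. by rewrite mulDl IH. Qed.

Lemma mul_tsumr (s : seq T) (h : T) :
  mul h (tsum zero add s) = tsum zero add (map (fun x => mul h x) s).
Proof. elim: s => [|x s IH] /=; first exact: mul0r'. by rewrite mulDr IH. Qed.

Lemma nz_mul (f g : T) v l : mul f g v l <> 0 ->
  exists t, (t <= size l)%N /\ f v (take t l) <> 0 /\ g (wend v (take t l)) (drop t l) <> 0.
Proof.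
move=> H; apply: NNPP => C; apply: H; rewrite /pa_mul; apply: big1 => [[t Ht]] _ /=.
apply: NNPP => D; apply: C; exists t; split; first by rewrite -ltnS.
split => Z; apply: D; by rewrite Z ?mul0r ?mulr0.
Qed.

Definition starts (f : T) v := forall w m, f w m <> 0 -> w = v.
Definition ends (f : T) v := forall w m, f w m <> 0 -> wend w m = v.

Lemma starts_mul f g v : starts f v -> starts (mul f g) v.
Proof. move=> H w m /nz_mul [t [_ [Hf _]]]; exact: H Hf. Qed.

Lemma ends_mul f g v : ends g v -> ends (mul f g) v.
Proof.
move=> H w m /nz_mul [t [_ [_ Hg]]]; rewrite -(cat_take_drop t m) wend_cat; exact: H Hg.
Qed.

Lemma inkD_zero : kD zero.
Proof. split => //; exists [::] => v l; by rewrite /pa_zero. Qed.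

Lemma inkD_add f g : kD f -> kD g -> kD (add f g).
Proof.
move=> [Wf [sf Sf]] [Wg [sg Sg]]; split.
  by move=> v l Hw; rewrite /pa_add Wf // Wg // addr0.
exists (sf ++ sg) => v l H; apply List.in_or_app.
case: (classic (f v l = 0)) => Hf; last by left; exact: Sf.
right; apply: Sg => Hg; apply: H; by rewrite /pa_add Hf Hg addr0.
Qed.

Lemma inkD_opp f : kD f -> kD (opp f).
Proof.
move=> [Wf [sf Sf]]; split; first by move=> v l Hw; rewrite /pa_opp Wf // oppr0.
exists sf => v l H; apply: Sf => Z; apply: H; by rewrite /pa_opp Z oppr0.
Qed.

Lemma inkD_scal c f : kD f -> kD (pa_scal c f).
Proof.
move=> [Wf [sf Sf]]; split; first by move=> v l Hw; rewrite /pa_scal Wf // mulr0.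
exists sf => v l H; apply: Sf => Z; apply: H; by rewrite /pa_scal Z mulr0.
Qed.

Lemma inkD_walk f v l : kD f -> f v l <> 0 -> is_walk src tgt v l.
Proof. move=> [Wf _] H; apply: NNPP => C; apply: H; exact: Wf. Qed.

Lemma inkD_mul f g : kD f -> kD g -> kD (mul f g).
Proof.
move=> Kf Kg; have [_ [sf Sf]] := Kf; have [_ [sg Sg]] := Kg; split.
  move=> v l Hw; apply: NNPP => /nz_mul [t [_ [Hf Hg]]]; apply: Hw.
  rewrite -(cat_take_drop t l); apply/walk_cat; split; [exact: inkD_walk Hf|exact: inkD_walk Hg].
exists (List.flat_map (fun p => List.map (fun q => (p.1, p.2 ++ q.2)) sg) sf).
move=> v l /nz_mul [t [_ [Hf Hg]]]; apply/List.in_flat_map.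
exists (v, take t l); split; first exact: Sf.
apply/List.in_map_iff; exists (wend v (take t l), drop t l); split; last exact: Sg.
by rewrite /= cat_take_drop.
Qed.

Definition top (f : T) v l := f v l <> 0 /\ forall w m, f w m <> 0 -> (size m <= size l)%N.

Lemma top_mul f g v l1 l2 : top f v l1 -> top g (wend v l1) l2 ->
  mul f g v (l1 ++ l2) = f v l1 * g (wend v l1) l2 /\ top (mul f g) v (l1 ++ l2).
Proof.
move=> [nf bf] [ng bg].
have val : mul f g v (l1 ++ l2) = f v l1 * g (wend v l1) l2.
  rewrite /pa_mul.
  have Hi : (size l1 < (size (l1 ++ l2)).+1)%N by rewrite size_cat ltnS leq_addr.
  rewrite (bigD1 (Ordinal Hi)) //= take_size_cat // drop_size_cat // big1 ?addr0 //.
  move=> [t Ht] /= /eqP Hne; have Hne' : t <> size l1 by move=> E1; apply: Hne; exact: val_inj.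
  case: (ltngtP t (size l1)) => Ht1; last by [].
  - suff -> : g (wend v (take t (l1 ++ l2))) (drop t (l1 ++ l2)) = 0 by rewrite mulr0.
    apply: NNPP => C; have := bg _ _ C; rewrite size_drop size_cat; lia.
  - suff -> : f v (take t (l1 ++ l2)) = 0 by rewrite mul0r.
    apply: NNPP => C; have := bf _ _ C; rewrite size_takel; lia.
split; first exact: val.
split; first by rewrite val; apply/eqP; apply: mulf_neq0; apply/eqP.
move=> w m /nz_mul [t [Ht [Hf Hg]]].
have := bf _ _ Hf; have := bg _ _ Hg; rewrite size_cat size_drop size_takel // => H2 H1.
lia.
Qed.

Lemma exists_top f : kD f -> (exists v l, f v l <> 0) -> exists v l, top f v l.
Proof.
move=> [_ [s S]] [v0 [l0 H0]].
suff [p [_ [Hp Bp]]] : exists p, List.In p s /\ f p.1 p.2 <> 0 /\ forall q, List.In q s -> f q.1 q.2 <> 0 -> (size q.2 <= size p.2)%N.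
  exists p.1, p.2; split => // w m Hwm; exact: (Bp (w, m) (S _ _ Hwm)).
have : exists p, List.In p s /\ f p.1 p.2 <> 0 by exists (v0, l0); split => //; exact: S.
elim: s {S} => [|a s IH]; first by move=> [p []].
move=> [p0 [Ip0 Np0]]; case: (classic (exists p, List.In p s /\ f p.1 p.2 <> 0)) => [Hs|Hs].
  have [p [Ip [Np Bp]]] := IH Hs.
  case: (classic (f a.1 a.2 <> 0 /\ (size p.2 < size a.2)%N)) => [[Na Lt]|Ca].
    exists a; split; first by left.
    split => // q [<-|Iq] Nq //; apply: leq_trans (Bp q Iq Nq) (ltnW Lt).
  exists p; split; first by right.
  split => // q [<-|Iq] Nq; last exact: Bp.
  by rewrite leqNgt; apply/negP => Lt; apply: Ca.
exists a; split; first by left.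
split.
  case: Ip0 => [E0|Ip0]; first by subst. exfalso; apply: Hs; by exists p0.
move=> q [<-|Iq] Nq //; exfalso; apply: Hs; exists q; split => //.
Qed.

Definition pth (v : I) (l : seq E) : T :=
  fun w m => if excluded_middle_informative (w = v /\ m = l) then 1 else 0.

Lemma pth_at v l : pth v l v l = 1.
Proof. rewrite /pth; case: excluded_middle_informative => // [[]]; by split. Qed.

Lemma pth_nz v l w m : pth v l w m <> 0 -> w = v /\ m = l.
Proof. rewrite /pth; by case: excluded_middle_informative. Qed.

Lemma top_pth v l : top (pth v l) v l.
Proof.
split; first by rewrite pth_at; apply/eqP; exact: oner_neq0.
by move=> w m /pth_nz [_ ->].
Qed.

Lemma top_scal (c : k) f v l : c != 0 -> top f v l -> top (pa_scal c f) v l.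
Proof.
move=> Hc [Hf Bf]; split; first by rewrite /pa_scal; apply/eqP; apply: mulf_neq0 => //; apply/eqP.
move=> w m H; apply: (Bf w) => Z; apply: H; by rewrite /pa_scal Z mulr0.
Qed.

Lemma kD_pth v l : is_walk src tgt v l -> kD (pth v l).
Proof.
move=> W; split.
  move=> w m Hw; apply: NNPP => /pth_nz [E1 E2]; apply: Hw; by rewrite E1 E2.
exists [:: (v, l)] => w m /pth_nz [-> ->]; by left.
Qed.

Lemma mul_e_l u f w m : mul (pth u [::]) f w m = pth u [::] w [::] * f w m.
Proof.
rewrite /pa_mul big_ord_recl /= take0 drop0 big1 ?addr0 // => -[i Hi] _ /=.
suff -> : pth u [::] w (take i.+1 m) = 0 by rewrite mul0r.
apply: NNPP => /pth_nz [_ E1].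
have : size (take i.+1 m) = i.+1 by rewrite size_takel.
by rewrite E1.
Qed.

Lemma mul_e_r u f w m : mul f (pth u [::]) w m = f w m * pth u [::] (wend w m) [::].
Proof.
rewrite /pa_mul big_ord_recr /= take_size drop_size big1 ?add0r // => -[i Hi] _ /=.
suff -> : pth u [::] (wend w (take i m)) (drop i m) = 0 by rewrite mulr0.
apply: NNPP => /pth_nz [_ E1].
have : size (drop i m) = (size m - i)%N by rewrite size_drop.
rewrite E1 /=; lia.
Qed.

Lemma reach_walk u v : reach src tgt u v <-> exists l, is_walk src tgt u l /\ wend u l = v.
Proof.
split.
  elim => [x y [e [Hs Ht]]|x|x y z _ [l1 [W1 E1]] _ [l2 [W2 E2]]].
  - by exists [:: e]; rewrite /= Hs Ht.
  - by exists [::].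
  - exists (l1 ++ l2); rewrite wend_cat E1 E2; split => //; apply/walk_cat; by rewrite E1.
move=> [l []]; elim: l u => [|e l IH] u /=; first by move=> _ ->; apply: rt_refl.
move=> [Hs W] Ht; apply: rt_trans (IH _ W Ht); apply: rt_step; by exists e.
Qed.

Lemma Asub_zero i j : Asub i j zero.
Proof. split; first exact: inkD_zero. by move=> v l; rewrite /pa_zero. Qed.

Lemma Asub_add i j f g : Asub i j f -> Asub i j g -> Asub i j (add f g).
Proof.
move=> [Kf Sf] [Kg Sg]; split; first exact: inkD_add.
move=> v l H; case: (classic (f v l = 0)) => Hf; last exact: Sf.
apply: Sg => Hg; apply: H; by rewrite /pa_add Hf Hg addr0.
Qed.

Lemma Asub_opp i j f : Asub i j f -> Asub i j (opp f).
Proof.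
move=> [Kf Sf]; split; first exact: inkD_opp.
move=> v l H; apply: Sf => Z; apply: H; by rewrite /pa_opp Z oppr0.
Qed.

Lemma Asub_scal i j c f : Asub i j f -> Asub i j (pa_scal c f).
Proof.
move=> [Kf Sf]; split; first exact: inkD_scal.
move=> v l H; apply: Sf => Z; apply: H; by rewrite /pa_scal Z mulr0.
Qed.

Lemma Asub_mul i j l f g : Asub i j f -> Asub j l g -> Asub i l (mul f g).
Proof.
move=> [Kf Sf] [Kg Sg]; split; first exact: inkD_mul.
move=> v m /nz_mul [t [_ [Hf Hg]]]; have [-> E1] := Sf _ _ Hf.
have [E2 E3] := Sg _ _ Hg; split => //.
rewrite -(cat_take_drop t m) wend_cat E1 -E3 E2 //.
Qed.

Lemma Asub_pth i j l : is_walk src tgt i l -> wend i l = j -> Asub i j (pth i l).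
Proof. move=> W E1; split; first exact: kD_pth. by move=> v m /pth_nz [-> ->]. Qed.

Lemma Asub_reach i j f v l : Asub i j f -> f v l <> 0 -> reach src tgt i j.
Proof.
move=> [Kf Sf] H; have [E1 E2] := Sf _ _ H; apply/reach_walk; exists l.
subst; split => //; exact: inkD_walk H.
Qed.

Definition symR := forall u v, reach src tgt u v -> reach src tgt v u.

Lemma nz_ex (f : T) : f <> zero -> exists v l, f v l <> 0.
Proof.
move=> H; apply: NNPP => C; apply: H; apply: pa_ext => v l; rewrite /pa_zero.
apply: NNPP => D; apply: C; by exists v, l.
Qed.

Lemma top_nz (f : T) v l : top f v l -> f <> zero.
Proof. move=> [H _] Z; apply: H; by rewrite Z. Qed.

Lemma back_path (f : T) v l : symR -> kD f -> f v l <> 0 ->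
  exists lq, is_walk src tgt (wend v l) lq /\ wend (wend v l) lq = v.
Proof.
move=> S K H; apply/reach_walk; apply: S; apply/reach_walk; exists l; split => //.
exact: inkD_walk H.
Qed.

Lemma mul_nil (f g : T) v : mul f g v [::] = f v [::] * g v [::].
Proof. by rewrite /pa_mul big_ord1. Qed.

Lemma ends_e f v : ends f v -> mul f (pth v [::]) = f.
Proof.
move=> H; apply: pa_ext => w m; rewrite mul_e_r.
case: (classic (f w m = 0)) => [->|Hf]; first by rewrite mul0r.
by rewrite (H _ _ Hf) pth_at mulr1.
Qed.

Lemma starts_e f v : starts f v -> mul (pth v [::]) f = f.
Proof.
move=> H; apply: pa_ext => w m; rewrite mul_e_l.
case: (classic (f w m = 0)) => [->|Hf]; first by rewrite mulr0.
by rewrite (H _ _ Hf) pth_at mul1r.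
Qed.

Lemma starts_pth v l : starts (pth v l) v.
Proof. by move=> w m /pth_nz []. Qed.

Lemma ends_pth v l : ends (pth v l) (wend v l).
Proof. by move=> w m /pth_nz [-> ->]. Qed.

Lemma ends_scal c f v : ends f v -> ends (pa_scal c f) v.
Proof. move=> H w m Hn; apply: H => Z; apply: Hn; by rewrite /pa_scal Z mulr0. Qed.

Lemma key_unit (a c : T) v L : kD a -> kD c -> top a v L -> a v L = -1 ->
  ends a v -> starts c v -> add (add a c) (mul a c) = zero -> False.
Proof.
move=> Ka Kc Ta Av Ea Sc Eq.
have pt w m : a w m + c w m + mul a c w m = 0.
  by have := f_equal (fun F => F w m) Eq; rewrite /pa_add /pa_zero.
have p0 := pt v [::]; rewrite mul_nil in p0.
case: L Ta Av => [|e L'] Ta Av.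
  move: p0; rewrite Av; have -> : -1 + c v [::] + -1 * c v [::] = -1 :> k by ring.
  by move=> /eqP; rewrite oppr_eq0 oner_eq0.
set L := e :: L' in Ta Av *.
case: (classic (c = zero)) => [Cz|Cnz].
  have := pt v L; rewrite Cz mul0r' /pa_zero Av; have -> : -1 + 0 + 0 = -1 :> k by ring.
  by move=> /eqP; rewrite oppr_eq0 oner_eq0.
have [w [M Tc]] := exists_top Kc (nz_ex Cnz).
have Ew : w = v by apply: (Sc w M); case: Tc.
subst w.
have WL : wend v L = v by apply: Ea; case: Ta.
have Tc' : top c (wend v L) M by rewrite WL.
have [Vm _] := top_mul Ta Tc'.
rewrite WL Av in Vm.
have cLM : c v (L ++ M) = 0.
  apply: NNPP => C; have := (proj2 Tc) _ _ C; rewrite size_cat /=; lia.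
have := pt v (L ++ M); rewrite cLM Vm addr0.
clear Tc'; case: M Tc Vm cLM => [|e2 M'] Tc Vm cLM.
  rewrite cats0 Av => H1.
  have c0 : c v [::] = -1.
    by rewrite -[LHS]addr0 -H1; ring.
  move: p0; rewrite c0; have -> : a v [::] + -1 + a v [::] * -1 = -1 :> k by ring.
  by move=> /eqP; rewrite oppr_eq0 oner_eq0.
have -> : a v (L ++ e2 :: M') = 0.
  apply: NNPP => C; have := (proj2 Ta) _ _ C; rewrite size_cat /=; lia.
rewrite add0r mulN1r => /eqP; rewrite oppr_eq0 => /eqP; by case: Tc.
Qed.

Lemma semiprime_sym : symR -> r_semiprime kD zero mul.
Proof.
move=> S x Kx H; apply: NNPP => Nx.
have [v [l1 Tx]] := exists_top Kx (nz_ex Nx).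
have [lq [Wq Eq]] := back_path S Kx (proj1 Tx).
have Tq : top (pth (wend v l1) lq) (wend v l1) lq by exact: top_pth.
have [_ Txq] := top_mul Tx Tq.
have Tx' : top x (wend v (l1 ++ lq)) l1 by rewrite wend_cat Eq.
have [_ T3] := top_mul Txq Tx'.
by apply: (top_nz T3); apply: H; exact: kD_pth.
Qed.

Lemma rprod_top (y : T) v L : top y v L -> wend v L = v ->
  forall n, exists L', top (rprod mul y (nseq n y)) v L'.
Proof.
move=> Ty Ey; elim => [|n [L' IH]] /=; first by exists L.
have IH' : top (rprod mul y (nseq n y)) (wend v L) L' by rewrite Ey.
have [_ T2] := top_mul Ty IH'; by exists (L ++ L').
Qed.

Lemma nil_sym : symR -> r_nil_zero kD zero add opp mul.
Proof.
move=> S U [[[SU _] RU] _] Nil x Ux; apply: NNPP => Nx.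
have Kx := SU x Ux.
have [v [l1 Tx]] := exists_top Kx (nz_ex Nx).
have [lq [Wq Eq]] := back_path S Kx (proj1 Tx).
have [_ Ty] := top_mul Tx (top_pth (wend v l1) lq).
have Uy := RU _ _ Ux (kD_pth Wq).
have Ey : wend v (l1 ++ lq) = v by rewrite wend_cat.
have [n Hn] := Nil _ Uy.
have [L' TL] := rprod_top Ty Ey n.
apply: (top_nz TL); apply: Hn; first by left.
  by rewrite size_nseq.
move=> z; elim: (n) => [|n' IH] //= [<-|]; [by left|exact: IH].
Qed.

Lemma levitzki_of_nil (X : Type) (R : X -> Prop) z ad op ml :
  r_nil_zero R z ad op ml -> r_levitzki_zero R z ad op ml.
Proof.
move=> H U IU HF; apply: (H U IU) => x Ux; apply: HF => y [<-|[]] //.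
Qed.

Lemma top_el (y : T) v L : top y v L ->
  top (mul (pth v [::]) y) v L /\ mul (pth v [::]) y v L = y v L.
Proof.
move=> [Hy By]; have Ev : mul (pth v [::]) y v L = y v L by rewrite mul_e_l pth_at mul1r.
split => //; split; first by rewrite Ev.
move=> w m; rewrite mul_e_l => H; apply: (By w) => Z; apply: H; by rewrite Z mulr0.
Qed.

Lemma jac_sym : symR -> r_jacobson_zero kD zero add opp mul.
Proof.
move=> S U [[SU _] RU] Rq x Ux; apply: NNPP => Nx.
have Kx := SU x Ux.
have [v [l1 Tx]] := exists_top Kx (nz_ex Nx).
have [lq [Wq Eq]] := back_path S Kx (proj1 Tx).
set u := wend v l1 in Wq Eq.
set mu := x v l1.
have muz : mu != 0 by apply/eqP; case: Tx.
set lam := - mu^-1.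
have lamz : lam != 0 by rewrite oppr_eq0 invr_eq0.
set q := pa_scal lam (pth u lq).
have Kq : kD q by apply: inkD_scal; exact: kD_pth.
have Tq : top q u lq by apply: top_scal => //; exact: top_pth.
have [Vy Ty] := top_mul Tx Tq.
set y := mul x q in Vy Ty.
have Uy : U y := RU _ _ Ux Kq.
have Ky : kD y := SU _ Uy.
have Vy' : y v (l1 ++ lq) = -1.
  by rewrite Vy /q /pa_scal pth_at mulr1 /lam mulrN mulfV.
have Ey : ends y v by apply: ends_mul; apply: ends_scal; rewrite -Eq; exact: ends_pth.
have [z [Kz Ez]] := Rq y Uy.
set ev := pth v [::].
have Kev : kD ev by exact: kD_pth.
set a := mul ev y.
set c := mul ev (mul z ev).
have Ea : ends a v by exact: ends_mul.
have Eac : mul (mul ev (mul y z)) ev = mul a c.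
  have Ea' : mul a ev = a := ends_e Ea.
  by rewrite /c -[in RHS]mul_assoc Ea' /a !mul_assoc.
have E1 := f_equal (fun F => mul (mul ev F) ev) Ez.
have Ea' : mul a ev = a := ends_e Ea.
rewrite /= mul0r' mul0l !mulDr !mulDl -/a Ea' Eac mul_assoc -/c in E1.
have [Ta Va] := top_el Ty.
apply: (key_unit (v := v) (L := l1 ++ lq) _ _ Ta _ Ea _ E1).
- exact: inkD_mul.
- by apply: inkD_mul => //; apply: inkD_mul.
- by rewrite Va Vy'.
- apply: starts_mul; exact: starts_pth.
Qed.

Lemma reach_trans x y z : reach src tgt x y -> reach src tgt y z -> reach src tgt x z.
Proof. exact: rt_trans. Qed.

Lemma reach_walk1 v l : is_walk src tgt v l -> reach src tgt v (wend v l).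
Proof. move=> W; apply/reach_walk; by exists l. Qed.

Lemma top_restrict (U : T -> Prop) (u : T) w m :
  (forall x a, U x -> kD a -> U (mul a x)) -> (forall x, U x -> kD x) ->
  U u -> u w m <> 0 ->
  exists u' L, U u' /\ kD u' /\ top u' w L.
Proof.
move=> LU SU Uu Hu.
have Uu' : U (mul (pth w [::]) u) by apply: LU => //; exact: kD_pth.
have Ku' := SU _ Uu'.
have Nz : mul (pth w [::]) u w m <> 0 by rewrite mul_e_l pth_at mul1r.
have [w' [L Tu]] := exists_top Ku' (ex_intro _ w (ex_intro _ m Nz)).
have HH := (starts_mul (g:=u) (@starts_pth w [::])).
have Ew : w' = w := HH _ _ (proj1 Tu).
subst w'; by exists (mul (pth w [::]) u), L.
Qed.

Lemma baer_sym : symR -> r_baer_zero kD zero add opp mul.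
Proof.
move=> S x Kx Hall; apply: NNPP => Nx.
have [i0 [l0 Hx0]] := nz_ex Nx.
pose P := fun f : T => kD f /\ forall w m, f w m <> 0 -> ~ reach src tgt w i0.
suff PP : r_prime_ideal kD zero add opp mul P.
  have [_ Px] := Hall P PP; apply: (Px _ _ Hx0); apply: rt_refl.
split; first split; first split.
- split; first by move=> f [].
  split; first by split; [exact: inkD_zero| move=> w m; rewrite /pa_zero].
  split.
    move=> f g [Kf Pf] [Kg Pg]; split; first exact: inkD_add.
    move=> w m H; case: (classic (f w m = 0)) => Hf; last exact: (Pf w m Hf).
    apply: (Pg w m) => Hg; apply: H; by rewrite /pa_add Hf Hg addr0.
  move=> f [Kf Pf]; split; first exact: inkD_opp.
  move=> w m H; apply: (Pf w m) => Z; apply: H; by rewrite /pa_opp Z oppr0.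
- move=> f a [Kf Pf] Ka; split; first exact: inkD_mul.
  move=> w m /nz_mul [t [_ [Hf _]]]; exact: Pf Hf.
- move=> f a [Kf Pf] Ka; split; first exact: inkD_mul.
  move=> w m /nz_mul [t [_ [Ha Hf]]] R.
  apply: (Pf _ _ Hf); apply: rt_trans (R).
  apply: S; apply: reach_walk1; exact: inkD_walk Ha.
split.
  exists x; split => //; move=> [_ Px]; apply: (Px _ _ Hx0); exact: rt_refl.
move=> U V [[[SU _] RU] LU] [[[SV _] RV] LV] H.
apply: NNPP => /not_or_and [NU NV].
have [u [Uu Nu]] : exists u, U u /\ ~ P u.
  apply: NNPP => C; apply: NU => u Uu; apply: NNPP => Nu; apply: C; by exists u.
have [v [Vv Nv]] : exists v, V v /\ ~ P v.
  apply: NNPP => C; apply: NV => v Vv; apply: NNPP => Nv; apply: C; by exists v.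
have [w [m [Hu Ru]]] : exists w m, u w m <> 0 /\ reach src tgt w i0.
  apply: NNPP => C; apply: Nu; split; first exact: SU.
  move=> w m Hw Rw; apply: C; by exists w, m.
have [w2 [m2 [Hv Rv]]] : exists w m, v w m <> 0 /\ reach src tgt w i0.
  apply: NNPP => C; apply: Nv; split; first exact: SV.
  move=> w' m' Hw Rw; apply: C; by exists w', m'.
have [u' [L1 [Uu' [Ku' Tu']]]] := top_restrict LU SU Uu Hu.
have [v' [L2 [Vv' [Kv' Tv']]]] := top_restrict LV SV Vv Hv.
have R1 : reach src tgt (wend w L1) w2.
  apply: (reach_trans (y := i0)); last exact: S _ _ Rv.
  apply: (reach_trans (y := w)); last exact: Ru.
  apply: S; apply: reach_walk1; exact: inkD_walk Ku' (proj1 Tu').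
have [lq [Wq Eq]] := (reach_walk (wend w L1) w2).1 R1.
have [_ T1] := top_mul Tu' (top_pth (wend w L1) lq).
have Tv'' : top v' (wend w (L1 ++ lq)) L2 by rewrite wend_cat Eq.
have [_ T2] := top_mul T1 Tv''.
have Uq : U (mul u' (pth (wend w L1) lq)) by apply: RU => //; exact: kD_pth.
have [_ PP] := H _ _ Uq Vv'.
exact: PP _ _ (proj1 T2) Ru.
Qed.

Lemma top_mulE f g v l1 u l2 : top f v l1 -> wend v l1 = u -> top g u l2 ->
  top (mul f g) v (l1 ++ l2).
Proof. move=> T1 E1 T2; rewrite -E1 in T2; exact: (top_mul T1 T2).2. Qed.

Lemma Asub_top i j f v l : Asub i j f -> top f v l -> v = i /\ wend v l = j.
Proof. move=> [_ S] [H _]; exact: S H. Qed.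

Lemma Asub_back i j f v l : symR -> Asub i j f -> f v l <> 0 ->
  exists lq, Asub j i (pth j lq) /\ top (pth j lq) j lq.
Proof.
move=> S Af H; have [E1 E2] := (proj2 Af) _ _ H.
have [lq [Wq Eq]] := back_path S (proj1 Af) H.
rewrite E2 in Wq Eq; rewrite E1 in Eq.
exists lq; split; [exact: Asub_pth|exact: top_pth].
Qed.

Local Notation gmul := (pa_gmul tgt).

Lemma gsemi_sym : symR -> forall i j,
  g_semiprime (Asub i j) (Asub j i) zero gmul.
Proof.
move=> S i j x Ax H; apply: NNPP => Nx.
have [v [l1 Tx]] := exists_top (proj1 Ax) (nz_ex Nx).
have [Ev Ew] := Asub_top Ax Tx; subst v.
have [lq [Aq Tq]] := Asub_back S Ax (proj1 Tx).
have Wq : wend j lq = i by have [_ ->] := Asub_top Aq Tq.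
have T1 := top_mulE Tx Ew Tq.
have T2 := top_mulE T1 (ltac:(by rewrite wend_cat Ew Wq)) Tx.
have T3 := top_mulE T2 (ltac:(by rewrite !wend_cat Ew Wq Ew)) Tq.
have T4 := top_mulE T3 (ltac:(by rewrite !wend_cat Ew Wq Ew Wq)) Tx.
apply: (top_nz T4); exact: H.
Qed.

Lemma gprod_top x i j l1 lq : top x i l1 -> wend i l1 = j -> wend j lq = i ->
  forall n, exists L, top (gprod gmul x (nseq n (pth j lq, x))) i L /\ wend i L = j.
Proof.
move=> Tx Ex Eq; elim => [|n [L [TL EL]]] /=; first by exists l1.
have T1 := top_mulE Tx Ex (top_pth j lq).
have T2 := top_mulE T1 (ltac:(by rewrite wend_cat Ex Eq)) TL.
exists ((l1 ++ lq) ++ L); split => //; by rewrite !wend_cat Ex Eq EL.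
Qed.

Lemma gnil_sym : symR -> forall i j,
  g_nil_zero (Asub i j) (Asub j i) zero add opp gmul.
Proof.
move=> S i j U [[[SU _] _] _] Nil x Ux; apply: NNPP => Nx.
have Ax := SU x Ux.
have [v [l1 Tx]] := exists_top (proj1 Ax) (nz_ex Nx).
have [Ev Ew] := Asub_top Ax Tx; subst v.
have [lq [Aq Tq]] := Asub_back S Ax (proj1 Tx).
have Wq : wend j lq = i by have [_ ->] := Asub_top Aq Tq.
have [n Hn] := Nil _ Ux.
have [L [TL _]] := gprod_top Tx Ew Wq n.
apply: (top_nz TL); apply: Hn; first by left.
  by rewrite size_nseq.
move=> p; elim: (n) => [|n' IH] //= [<-|]; [by split => //; left|exact: IH].
Qed.

Lemma Asub_tsum i j s : (forall f, List.In f s -> Asub i j f) -> Asub i j (tsum zero add s).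
Proof.
elim: s => [|f s IH] H /=; first exact: Asub_zero.
apply: Asub_add; [apply: H; by left|apply: IH => g Hg; apply: H; by right].
Qed.

Lemma tsum_mul2 (X : Type) (a b : T) (F : X -> T) (s : seq X) :
  tsum zero add (map (fun p => mul (mul a (F p)) b) s) = mul (mul a (tsum zero add (map F s))) b.
Proof.
elim: s => [|p s IH] /=; first by rewrite mul0r' mul0l.
by rewrite IH mulDr mulDl.
Qed.

Lemma tsum_mul1 (X : Type) (b : T) (F : X -> T) (s : seq X) :
  tsum zero add (map (fun p => mul (F p) b) s) = mul (tsum zero add (map F s)) b.
Proof.
elim: s => [|p s IH] /=; first by rewrite mul0l.
by rewrite IH mulDl.
Qed.

Lemma top_opp f v l : top f v l -> top (opp f) v l.
Proof.
move=> [H B]; split; first by rewrite /pa_opp => /eqP; rewrite oppr_eq0 => /eqP.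
move=> w m Hn; apply: (B w) => Z; apply: Hn; by rewrite /pa_opp Z oppr0.
Qed.

Lemma gjac_sym : symR -> forall i j,
  g_jacobson_zero (Asub i j) (Asub j i) zero add opp gmul.
Proof.
move=> S i j U [[SU _] _] Rq x Ux; apply: NNPP => Nx.
have Ax := SU x Ux.
have [v [l1 Tx]] := exists_top (proj1 Ax) (nz_ex Nx).
have [Ev Ew] := Asub_top Ax Tx; subst v.
have [lq [Aq Tq]] := Asub_back S Ax (proj1 Tx).
have Wq : wend j lq = i by have [_ ->] := Asub_top Aq Tq.
set mu := x i l1.
have muz : mu != 0 by apply/eqP; case: Tx.
set g := pa_scal mu^-1 (pth j lq).
have Ag : Asub j i g by exact: Asub_scal.
have Tg : top g j lq by apply: top_scal => //; rewrite invr_eq0.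
have [Va Ta] := top_mul Tx (ltac:(by rewrite Ew; exact: Tg)).
rewrite Ew in Va.
have Va' : mul x g i (l1 ++ lq) = 1 by rewrite Va /g /pa_scal pth_at mulr1 mulfV.
set a := mul x g in Va Ta Va'.
have Aa : Asub i i a by exact: Asub_mul Ag.
have [s [Hs Eb]] := Rq x Ux g Ag.
set c := tsum zero add (map (fun p => mul p.1 p.2) s).
have Ac : Asub i i c.
  apply: Asub_tsum => f /List.in_map_iff [p [<- Ip]].
  have [H1 H2] := Hs p Ip; exact: Asub_mul H2.
set u := add (add a c) (opp (mul a c)).
have Au : Asub i i u.
  apply: Asub_add; [exact: Asub_add|apply: Asub_opp; exact: Asub_mul Ac].
have Eu : mul u x = zero.
  have Hb := Eb x Ax; rewrite /pa_gmul in Hb.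
  rewrite (tsum_mul1 x (fun p => mul p.1 p.2)) -/c in Hb.
  have E3 : (fun p : T * T => mul (mul (mul (mul x g) p.1) p.2) x) =
            (fun p => mul (mul a (mul p.1 p.2)) x).
    apply: functional_extensionality => p; by rewrite -/a (mul_assoc a p.1 p.2).
  rewrite E3 (tsum_mul2 a x (fun p => mul p.1 p.2)) -/c in Hb.
  by rewrite /u !mulDl mulNl.
have Uz : u = zero.
  apply: NNPP => Nu.
  have [w [R Tu]] := exists_top (proj1 Au) (nz_ex Nu).
  have [Ew' Eu'] := Asub_top Au Tu; subst w.
  have T2 := top_mulE Tu Eu' Tx.
  exact: top_nz T2 Eu.
apply: (key_unit (a := opp a) (c := opp c) (v := i) (L := l1 ++ lq)).
- exact: inkD_opp (proj1 Aa).
- exact: inkD_opp (proj1 Ac).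
- exact: top_opp.
- by rewrite /pa_opp Va'.
- move=> w m Hn; apply: (proj2 (proj2 Aa w m _)) => Z; apply: Hn; by rewrite /pa_opp Z oppr0.
- move=> w m Hn; apply: (proj1 (proj2 Ac w m _)) => Z; apply: Hn; by rewrite /pa_opp Z oppr0.
- rewrite mulNl mulNr' /u in Uz *; apply: pa_ext => w m.
  have := f_equal (fun F => F w m) Uz; rewrite /pa_add /pa_opp /pa_zero => H.
  by rewrite -oppr0 -H; ring.
Qed.

Lemma gbaer_sym : symR -> forall i j,
  g_baer_zero (Asub i j) (Asub j i) zero add opp gmul.
Proof.
move=> S i j x Ax Hall; apply: NNPP => Nx.
pose P0 := fun f : T => f = zero.
suff PP : g_prime_ideal (Asub i j) (Asub j i) zero add opp gmul P0 by exact: Nx (Hall _ PP).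
split; first split; first split.
- split; first by move=> f ->; exact: Asub_zero.
  split; first by [].
  split; first by move=> f g -> ->; apply: pa_ext => v l; rewrite /pa_add /pa_zero addr0.
  by move=> f ->; apply: pa_ext => v l; rewrite /pa_opp /pa_zero oppr0.
- by move=> f g a -> _ _; rewrite /pa_gmul !mul0l.
- by move=> f g a -> _ _; rewrite /pa_gmul mul0r'.
split; first by exists x.
move=> U V [[[SU _] _] _] [[[SV _] _] _] H.
apply: NNPP => /not_or_and [NU NV].
have [u [Uu Nu]] : exists u, U u /\ u <> zero.
  apply: NNPP => C; apply: NU => u Uu; apply: NNPP => Nu; apply: C; by exists u.
have [v [Vv Nv]] : exists v, V v /\ v <> zero.
  apply: NNPP => C; apply: NV => v Vv; apply: NNPP => Nv; apply: C; by exists v.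
have Au := SU u Uu; have Av := SV v Vv.
have [w [lu Tu]] := exists_top (proj1 Au) (nz_ex Nu).
have [Ew Eu] := Asub_top Au Tu; subst w.
have [w [lv Tv]] := exists_top (proj1 Av) (nz_ex Nv).
have [Ew _] := Asub_top Av Tv; subst w.
have [lq [Aq Tq]] := Asub_back S Au (proj1 Tu).
have Wq : wend j lq = i by have [_ ->] := Asub_top Aq Tq.
have T1 := top_mulE Tu Eu Tq.
have T2 := top_mulE T1 (ltac:(by rewrite wend_cat Eu Wq)) Tv.
exact: top_nz T2 (H _ _ _ Uu Aq Vv).
Qed.

Lemma nsym_ex : ~ symR -> exists i j l0, is_walk src tgt i l0 /\ wend i l0 = j /\
  ~ reach src tgt j i.
Proof.
move=> NS; apply: NNPP => C; apply: NS => u v R; apply: NNPP => N.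
have [l0 [W E0]] := (reach_walk u v).1 R; apply: C; by exists u, v, l0.
Qed.

Lemma pth_nz0 v l : pth v l <> zero.
Proof. move=> Z; have := pth_at v l; rewrite Z /pa_zero => /eqP; by rewrite eq_sym oner_eq0. Qed.

Section Bad.
Variables (i j : I) (Nji : ~ reach src tgt j i).
Definition U0 (f : T) := kD f /\ forall v l, f v l <> 0 ->
  reach src tgt v i /\ reach src tgt j (wend v l).

Lemma U0_ideal : r_ideal kD zero add opp mul U0.
Proof.
split; first split; first split.
- by move=> f [].
- split; first by split; [exact: inkD_zero|move=> v l; rewrite /pa_zero].
  split.
    move=> f g [Kf Pf] [Kg Pg]; split; first exact: inkD_add.
    move=> w m H; case: (classic (f w m = 0)) => Hf; last exact: (Pf w m Hf).
    apply: (Pg w m) => Hg; apply: H; by rewrite /pa_add Hf Hg addr0.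
  move=> f [Kf Pf]; split; first exact: inkD_opp.
  move=> w m H; apply: (Pf w m) => Z; apply: H; by rewrite /pa_opp Z oppr0.
- move=> f a [Kf Pf] Ka; split; first exact: inkD_mul.
  move=> w m /nz_mul [t [_ [Hf Ha]]]; have [R1 R2] := Pf _ _ Hf; split => //.
  rewrite -(cat_take_drop t m) wend_cat; apply: reach_trans R2 _; exact: reach_walk1 (inkD_walk Ka Ha).
- move=> f a [Kf Pf] Ka; split; first exact: inkD_mul.
  move=> w m /nz_mul [t [_ [Ha Hf]]]; have [R1 R2] := Pf _ _ Hf; split.
    apply: reach_trans R1; exact: reach_walk1 (inkD_walk Ka Ha).
  by rewrite -(cat_take_drop t m) wend_cat.
Qed.

Lemma U0_sq f g : U0 f -> U0 g -> mul f g = zero.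
Proof.
move=> [_ Pf] [_ Pg]; apply: pa_ext => v l; apply: NNPP => /nz_mul [t [_ [Hf Hg]]].
have [_ R1] := Pf _ _ Hf; have [R2 _] := Pg _ _ Hg; apply: Nji; exact: reach_trans R1 R2.
Qed.

Variables (l0 : seq E) (W0 : is_walk src tgt i l0) (E0 : wend i l0 = j).

Lemma U0_x : U0 (pth i l0).
Proof.
split; first exact: kD_pth.
move=> v l /pth_nz [-> ->]; rewrite E0; split; exact: rt_refl.
Qed.

Lemma bad_semiprime : ~ r_semiprime kD zero mul.
Proof.
move=> H; apply: (@pth_nz0 i l0); apply: H; first exact: (proj1 U0_x).
move=> a Ka; apply: U0_sq; last exact: U0_x.
have [[_ RU] _] := U0_ideal; exact: RU _ _ U0_x Ka.
Qed.

Lemma bad_ring rk : ~ ring_radical_zero rk kD zero add opp mul.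
Proof.
have I0 := U0_ideal; have [[[SU [Z0 _]] RU] LU] := I0.
case: rk => /= H; apply: (@pth_nz0 i l0).
- apply: H; first exact: (proj1 U0_x).
  move=> P [[[[_ [PZ _]] _] _] [_ PP]].
  have [] := PP U0 U0 I0 I0 (fun u v Uu Uv => eq_ind_r P PZ (U0_sq Uu Uv)); apply; exact: U0_x.
- apply: (H U0 I0); last exact: U0_x.
  move=> x Ux; exists 1%N => x' s [<-|[]] Hs Hin.
  case: s Hs Hin => [|y [|]] //= _ Hin.
  have -> : y = x by case: (Hin y (or_introl erefl)) => [<-|[]].
  exact: U0_sq.
- apply: (H U0 I0); last exact: U0_x.
  move=> F HF; exists 1%N => x' s Ix Hs Hin.
  case: s Hs Hin => [|y [|]] //= _ Hin.
  apply: U0_sq; [exact: HF|apply: HF; apply: Hin; by left].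
- apply: (H U0 (conj (proj1 (proj1 I0)) RU)); last exact: U0_x.
  move=> x Ux; exists (opp x); split; first exact: inkD_opp (SU _ Ux).
  rewrite mulNr' (U0_sq Ux Ux); apply: pa_ext => v l.
  by rewrite /pa_add /pa_opp /pa_zero subrr oppr0 addr0.
Qed.

Lemma Gzero g : Asub j i g -> g = zero.
Proof. move=> Ag; apply: NNPP => /nz_ex [v [l H]]; apply: Nji; exact: Asub_reach Ag H. Qed.

Lemma gmul_zero x g y : Asub j i g -> gmul x g y = zero.
Proof. by move=> /Gzero ->; rewrite /pa_gmul mul0r' mul0l. Qed.

Lemma M_gideal : g_ideal (Asub i j) (Asub j i) zero add opp gmul (Asub i j).
Proof.
split; first split; first split.
- by [].
- split; first exact: Asub_zero.
  split; [exact: Asub_add|exact: Asub_opp].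
- move=> x g a _ Ag _; rewrite gmul_zero //; exact: Asub_zero.
- move=> x g a _ Ag _; rewrite gmul_zero //; exact: Asub_zero.
Qed.

Lemma bad_gsemi : ~ g_semiprime (Asub i j) (Asub j i) zero gmul.
Proof.
move=> H; apply: (@pth_nz0 i l0); apply: H; first exact: Asub_pth.
move=> g a d _ _ Ad; rewrite /pa_gmul (Gzero Ad) mul0r' mul0l //.
Qed.

Lemma bad_gamma rk : ~ gamma_radical_zero rk (Asub i j) (Asub j i) zero add opp gmul.
Proof.
have I0 := M_gideal; have Ax : Asub i j (pth i l0) by exact: Asub_pth.
case: rk => /= H; apply: (@pth_nz0 i l0).
- apply: H => //.
  move=> P [[[[_ [PZ _]] _] _] [_ PP]].
  have [] := PP _ _ I0 I0 (fun u g v _ Ag _ => eq_ind_r P PZ (gmul_zero u v Ag)); apply; exact: Ax.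
- apply: (H _ I0) => // x Ux; exists 1%N => x' s _ Hs Hin.
  case: s Hs Hin => [|[g y] [|]] //= _ Hin.
  apply: gmul_zero; exact: (proj1 (Hin _ (or_introl erefl))).
- apply: (H _ I0) => // F HF; exists 1%N => x' s _ Hs Hin.
  case: s Hs Hin => [|[g y] [|]] //= _ Hin.
  apply: gmul_zero; exact: (proj1 (Hin _ (or_introl erefl))).
- apply: (H _ (proj1 I0)) => // x Ux g Ag; exists [::]; split => // b Ab /=.
  rewrite gmul_zero //; apply: pa_ext => v l.
  by rewrite /pa_add /pa_opp /pa_zero oppr0 !addr0.
Qed.

End Bad.

Lemma reg_iff : symR <-> ~ has_regular_path src tgt.
Proof.
split.
  move=> S [i [j [l [W [_ [E1 Nr]]]]]]; apply: Nr; apply: S; apply/reach_walk; by exists l.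
move=> NR u v R; apply: NNPP => N.
have [l [W E1]] := (reach_walk u v).1 R.
case: l W E1 => [|e l] W E1.
  by apply: N; rewrite -E1; exact: rt_refl.
apply: NR; exists u, v, (e :: l); by split.
Qed.

Lemma Azero_iff i j : (forall f, Asub i j f -> f = zero) <-> ~ reach src tgt i j.
Proof.
split.
  move=> H R; have [l [W E1]] := (reach_walk i j).1 R.
  apply: (@pth_nz0 i l); apply: H; exact: Asub_pth.
move=> N f Af; apply: NNPP => /nz_ex [v [l H]]; apply: N; exact: Asub_reach Af H.
Qed.

Lemma vi_iff : symR <-> (forall i j,
  (forall f, Asub i j f -> f = zero) <-> (forall f, Asub j i f -> f = zero)).
Proof.
split.
  move=> S i j; rewrite !Azero_iff; split => N R; apply: N; exact: S.
move=> H u v R; apply: NNPP => N.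
have := (H v u); rewrite !Azero_iff => -[Hv _]; exact: Hv N R.
Qed.

Lemma add0f (f : T) : add zero f = f.
Proof. apply: pa_ext => v l; by rewrite /pa_add /pa_zero add0r. Qed.
Lemma addf0 (f : T) : add f zero = f.
Proof. apply: pa_ext => v l; by rewrite /pa_add /pa_zero addr0. Qed.

Lemma tsum_zeros (s : seq T) : (forall y, List.In y s -> y = zero) -> tsum zero add s = zero.
Proof.
elim: s => [|y s IH] H //=; rewrite (H y (or_introl erefl)) add0f; apply: IH => z Hz; apply: H; by right.
Qed.

Definition Bc (C : I -> Prop) (f : T) :=
  kD f /\ forall w m, f w m <> 0 -> C w /\ C = reach src tgt w.

Lemma reach_eq u w : symR -> reach src tgt u w -> reach src tgt u = reach src tgt w.
Proof.
move=> S R; apply: functional_extensionality => z; apply: propositional_extensionality.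
split => H; [apply: reach_trans (S _ _ R) H|exact: reach_trans R H].
Qed.

Lemma In_filter (X : Type) (P : pred X) (q : X) s :
  List.In q (filter P s) <-> List.In q s /\ P q.
Proof.
elim: s => [|x s IH] /=; first by split => [|[]].
case: ifP => Px /=; rewrite IH; split.
- move=> [E1|[H1 H2]]; last by split => //; right.
  subst; split => //; by left.
- move=> [[E1|H1] H2]; [by left|by right].
- by move=> [H1 H2]; split => //; right.
- move=> [[E1|H1] H2] //; subst; by rewrite Px in H2.
Qed.

Lemma tsum_split (X : Type) (P : pred X) (F : X -> T) s :
  tsum zero add (map F s) = add (tsum zero add (map F (filter P s)))
                                (tsum zero add (map F (filter (predC P) s))).
Proof.
elim: s => [|x s IH] /=; first by rewrite addf0.
case: ifP => Px /=; rewrite IH; apply: pa_ext => v l; rewrite /pa_add /=.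
- by rewrite addrA.
- by rewrite addrCA.
Qed.

Lemma dsum_sym : symR -> pa_direct_sum_of_primes k src tgt.
Proof.
move=> S; exists (I -> Prop), Bc.
split.
  move=> C; split; first split; first split.
  - split; first by move=> f [].
    split; first by split; [exact: inkD_zero|move=> v l; rewrite /pa_zero].
    split.
      move=> f g [Kf Pf] [Kg Pg]; split; first exact: inkD_add.
      move=> w m H; case: (classic (f w m = 0)) => Hf; last exact: (Pf w m Hf).
      apply: (Pg w m) => Hg; apply: H; by rewrite /pa_add Hf Hg addr0.
    move=> f [Kf Pf]; split; first exact: inkD_opp.
    move=> w m H; apply: (Pf w m) => Z; apply: H; by rewrite /pa_opp Z oppr0.
  - move=> f a [Kf Pf] Ka; split; first exact: inkD_mul.
    move=> w m /nz_mul [t [_ [Hf _]]]; exact: Pf Hf.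
  - move=> f a [Kf Pf] Ka; split; first exact: inkD_mul.
    move=> w m /nz_mul [t [_ [Ha Hf]]]; have [C1 C2] := Pf _ _ Hf.
    have R : reach src tgt w (wend w (take t m)) by exact: reach_walk1 (inkD_walk Ka Ha).
    rewrite C2; split; [exact: S _ _ R|exact: reach_eq S (S _ _ R)].
  - move=> c f [Kf Pf]; split; first exact: inkD_scal.
    move=> w m H; apply: (Pf w m) => Z; apply: H; by rewrite /pa_scal Z mulr0.
split.
  move=> C x y [Kx Px] [Ky Py] H; apply: NNPP => /not_or_and [Nx Ny].
  have [w1 [L1 Tx]] := exists_top Kx (nz_ex Nx).
  have [w2 [L2 Ty]] := exists_top Ky (nz_ex Ny).
  have [C1 E1] := Px _ _ (proj1 Tx); have [C2 E2] := Py _ _ (proj1 Ty).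
  have R1 : reach src tgt w1 (wend w1 L1) by exact: reach_walk1 (inkD_walk Kx (proj1 Tx)).
  have R2 : reach src tgt (wend w1 L1) w2.
    apply: reach_trans (S _ _ R1) _; by rewrite -E1.
  have [lq [Wq Eq]] := (reach_walk _ _).1 R2.
  have Bq : Bc C (pth (wend w1 L1) lq).
    split; first exact: kD_pth.
    move=> w m /pth_nz [-> _]; rewrite E1; split => //; exact: reach_eq S R1.
  have T1 := top_mulE Tx erefl (top_pth (wend w1 L1) lq).
  have T2 := top_mulE T1 (ltac:(by rewrite wend_cat Eq)) Ty.
  exact: top_nz T2 (H _ Bq).
split.
  move=> x [Wx [sl Hsl]]; move: x Wx Hsl.
  elim: sl => [|p sl IH] x Wx Hsl.
    exists [::]; split => //=; apply: pa_ext => v l; apply: NNPP => H; exact: Hsl _ _ H.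
  pose single := fun w m => if excluded_middle_informative ((w, m) = p) then x w m else 0.
  pose x' := fun w m => if excluded_middle_informative ((w, m) = p) then 0 else x w m.
  have [s' [Hs' Ex']] : exists s, (forall q, List.In q s -> Bc q.1 q.2) /\
      x' = tsum zero add (map snd s).
    apply: IH.
      move=> w m Hw; rewrite /x'; destruct (excluded_middle_informative ((w, m) = p)) => //; exact: Wx.
    move=> w m Hx.
    have [Hp Hx0] : (w, m) <> p /\ x w m <> 0.
      by move: Hx; rewrite /x'; destruct (excluded_middle_informative ((w, m) = p)).
    by case: (Hsl _ _ Hx0) => // E1; case: Hp.
  have Bs : Bc (reach src tgt p.1) single.
    split.
      split.
        move=> v l Hw; rewrite /single; destruct (excluded_middle_informative ((v, l) = p)) => //; exact: Wx.
      exists [:: p] => v l; rewrite /single; destruct (excluded_middle_informative ((v, l) = p)) as [Ep|] => // _; rewrite Ep; by left.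
    move=> w m; rewrite /single; destruct (excluded_middle_informative ((w, m) = p)) as [Ep|] => // _; rewrite -Ep /=.
    split; [exact: rt_refl|by []].
  exists ((reach src tgt p.1, single) :: s'); split.
    move=> q [Eq|Iq]; last exact: Hs'.
    by rewrite -Eq.
  rewrite /= -Ex'; apply: pa_ext => w m; rewrite /pa_add /single /x'.
  by destruct (excluded_middle_informative ((w, m) = p)); rewrite ?addr0 ?add0r.
move=> C x s [Kx Px] Hs Ex; apply: pa_ext => w m; rewrite /pa_zero; apply: NNPP => Hn.
have [_ EC] := Px _ _ Hn; apply: Hn; rewrite Ex.
clear Ex; elim: s Hs => [|q s IH] Hs /=; first by rewrite /pa_zero.
rewrite /pa_add IH ?addr0; last by move=> q' Iq; apply: Hs; right.
apply: NNPP => Hq; have [Nq [_ Pq]] := Hs q (or_introl erefl).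
have [_ Eq] := Pq _ _ Hq; apply: Nq; by rewrite Eq EC.
Qed.

Lemma dsum_semiprime : pa_direct_sum_of_primes k src tgt -> r_semiprime kD zero mul.
Proof.
move=> [J [B [HI [HP [HG HInd]]]]] x Kx H.
have BK j f : B j f -> kD f by have [[[[SU _] _] _] _] := HI j; exact: SU.
have B0 j : B j zero by have [[[[_ [Z _]] _] _] _] := HI j.
have BA j f g : B j f -> B j g -> B j (add f g).
  by have [[[[_ [_ [A _]]] _] _] _] := HI j; exact: A.
have BR j f a : B j f -> kD a -> B j (mul f a) by have [[[_ R] _] _] := HI j; exact: R.
have BL j f a : B j f -> kD a -> B j (mul a f) by have [[_ L] _] := HI j; exact: L.
have Inter j j' y : B j y -> B j' y -> j' <> j -> y = zero.
  move=> By By' Nj; apply: (HInd j y [:: (j', y)]) => //; last by rewrite /= addf0.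
  by move=> p [<-|[]].
have [s [Hs Ex]] := HG x Kx.
move: {2}(size s) (leqnn (size s)) => n; elim: n s x Kx H Hs Ex => [|n IH] s x Kx H Hs Ex Hsz.
  by case: s Hs Ex Hsz => // _ ->.
case: s Hs Ex Hsz => [|p0 s'] Hs Ex Hsz; first by rewrite Ex.
set s := p0 :: s' in Hs Ex.
set j := p0.1.
pose P := fun q : J * T => if excluded_middle_informative (q.1 = j) then true else false.
set X := tsum zero add (map snd (filter P s)).
set R := tsum zero add (map snd (filter (predC P) s)).
have Ex' : x = add X R by rewrite Ex (tsum_split P).
have BXg : forall l, (forall q, List.In q l -> B q.1 q.2) -> B j (tsum zero add (map snd (filter P l))).
  elim => [|q l IHl] Hl /=; first exact: B0.
  rewrite /P; destruct (excluded_middle_informative (q.1 = j)) as [Eq|] => /=.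
    apply: BA; last by apply: IHl => q' Iq'; apply: Hl; right.
    rewrite -Eq; apply: Hl; by left.
  by apply: IHl => q' Iq'; apply: Hl; right.
have BX : B j X by exact: BXg.
have Hs2 : forall q, List.In q (filter (predC P) s) -> q.1 <> j /\ B q.1 q.2.
  move=> q /In_filter [Iq]; rewrite /= /P.
  destruct (excluded_middle_informative (q.1 = j)) => // _; split => //; exact: Hs.
have KRg : forall l, (forall q, List.In q l -> B q.1 q.2) -> kD (tsum zero add (map snd l)).
  elim => [|q l IHl] Hl /=; first exact: inkD_zero.
  apply: inkD_add; [apply: (BK q.1); apply: Hl; by left|apply: IHl => q' Iq'; apply: Hl; by right].
have KR : kD R by apply: KRg => q Iq; have [_ ?] := Hs2 q Iq.
have Rz a : B j a -> mul R a = zero.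
  move=> Ba; rewrite /R mul_tsuml; apply: tsum_zeros => y /List.in_map_iff [z [<- /List.in_map_iff [q [<- Iq]]]].
  have [Nq Bq] := Hs2 q Iq.
  apply: (Inter j q.1) => //; [exact: BL (BK _ _ Bq)|exact: BR (BK _ _ Ba)].
have XRz a : B j a -> mul (mul X a) R = zero.
  move=> Ba; rewrite /R mul_tsumr; apply: tsum_zeros => y /List.in_map_iff [z [<- /List.in_map_iff [q [<- Iq]]]].
  have [Nq Bq] := Hs2 q Iq.
  have BXa : B j (mul X a) by exact: BR (BK _ _ Ba).
  apply: (Inter j q.1) => //; [exact: BR (BK _ _ Bq)|exact: BL (BK _ _ BXa)].
have XaX : forall a, B j a -> mul (mul X a) X = zero.
  move=> a Ba; have := H a (BK _ _ Ba).
  by rewrite Ex' mulDl (Rz a Ba) addf0 mulDr (XRz a Ba) addf0.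
have X0 : X = zero by case: (HP j X X BX BX XaX).
have xR : x = R by rewrite Ex' X0 add0f.
rewrite xR; apply: (IH (filter (predC P) s) R) => //.
- by move=> a Ka; rewrite -xR; exact: H.
- by move=> q Iq; have [_ ?] := Hs2 q Iq.
- have : size (filter (predC P) s) = size (filter (predC P) s').
    rewrite /s /= /P; by destruct (excluded_middle_informative (p0.1 = j)).
  move=> ->; rewrite size_filter; apply: leq_trans (count_size _ _) _; by rewrite ltnS in Hsz.
Qed.

End PA.

Section G.
Variables (I E : Type) (src tgt : E -> I).
Local Notation reach := (reach src tgt).
Local Notation rst := (clos_refl_sym_trans I (adj src tgt)).
Local Notation subg := (subgraph I E).

Definition symG := forall u v, reach u v -> reach v u.

Definition Wsg (u : I) : subg :=
  Subgraph (fun w => rst u w) (fun e => rst u (src e)).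

Lemma adj_e e : adj src tgt (src e) (tgt e).
Proof. by exists e. Qed.

Lemma Wsub u : is_subgraph src tgt (Wsg u).
Proof. move=> e /= H; split => //; apply: rst_trans H _; apply: rst_step; exact: adj_e. Qed.

Lemma rst_mono (R1 R2 : relation I) a b : (forall x y, R1 x y -> R2 x y) ->
  clos_refl_sym_trans I R1 a b -> clos_refl_sym_trans I R2 a b.
Proof.
move=> H; elim => [x y /H|x|x y _ IH|x y z _ IH1 _ IH2].
- exact: rst_step.
- exact: rst_refl.
- exact: rst_sym.
- exact: rst_trans IH1 IH2.
Qed.

Lemma rt_mono (R1 R2 : relation I) a b : (forall x y, R1 x y -> R2 x y) ->
  clos_refl_trans I R1 a b -> clos_refl_trans I R2 a b.
Proof.
move=> H; elim => [x y /H|x|x y z _ IH1 _ IH2].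
- exact: rt_step.
- exact: rt_refl.
- exact: rt_trans IH1 IH2.
Qed.

Lemma rt_rst (R1 : relation I) a b : clos_refl_trans I R1 a b -> clos_refl_sym_trans I R1 a b.
Proof.
elim => [x y H|x|x y z _ IH1 _ IH2].
- exact: rst_step.
- exact: rst_refl.
- exact: rst_trans IH1 IH2.
Qed.

Lemma adj_in_adj (H : subg) x y : adj_in src tgt H x y -> adj src tgt x y.
Proof. move=> [e [_ [Hs Ht]]]; by exists e. Qed.

Lemma adj_in_mono (H H' : subg) x y : (forall e, sg_e H e -> sg_e H' e) ->
  adj_in src tgt H x y -> adj_in src tgt H' x y.
Proof. move=> S [e [He Hst]]; exists e; split => //; exact: S. Qed.

Lemma G_in u a b : rst u a -> rst a b -> clos_refl_sym_trans I (adj_in src tgt (Wsg u)) a b.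
Proof.
move=> Ha /clos_rst_rst1n_iff H; elim: H Ha => [x|x y z Hxy _ IH] Hx.
  exact: rst_refl.
have Hy : rst u y by case: Hxy => [Hxy|Hyx]; [apply: rst_trans Hx (rst_step _ _ _ _ Hxy)|
                                     apply: rst_trans Hx (rst_sym _ _ _ _ (rst_step _ _ _ _ Hyx))].
apply: rst_trans (IH Hy).
case: Hxy => [[e [Hs Ht]]|[e [Hs Ht]]].
  apply: rst_step; exists e; split => //=; by rewrite Hs.
apply: rst_sym; apply: rst_step; exists e; split => //=; by rewrite Hs.
Qed.

Lemma G_weak u : weakly_connected src tgt (Wsg u).
Proof.
move=> w1 w2 /= H1 H2.
apply: rst_trans (rst_sym _ _ _ _ (G_in (rst_refl _ _ u) H1)) (G_in (rst_refl _ _ u) H2).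
Qed.

Lemma G_max u (H' : subg) : is_subgraph src tgt H' -> weakly_connected src tgt H' ->
  sg_le (Wsg u) H' -> sg_le H' (Wsg u).
Proof.
move=> Hs Hw [Lv Le]; have Hu : sg_v H' u by apply: Lv; exact: rst_refl.
have Vw : forall w, sg_v H' w -> rst u w.
  move=> w Hw'; apply: rst_mono (Hw u w Hu Hw'); exact: adj_in_adj.
split => //= e He; apply: Vw; exact: (Hs e He).1.
Qed.

Lemma Wweak u : weak_component src tgt (Wsg u).
Proof. split; first exact: Wsub. split; first exact: G_weak. exact: G_max. Qed.

Lemma rst_reach a b : symG -> rst a b -> reach a b.
Proof.
move=> S; elim => [x y H|x|x y _ IH|x y z _ IH1 _ IH2].
- exact: rt_step.
- exact: rt_refl.
- exact: S.
- exact: rt_trans IH1 IH2.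
Qed.

Lemma reach_in u a b : rst u a -> reach a b -> clos_refl_trans I (adj_in src tgt (Wsg u)) a b.
Proof.
move=> Ha R; elim: R Ha => [x y [e [Hs Ht]]|x|x y z R1 IH1 R2 IH2] Hx.
- apply: rt_step; exists e; split => //=; by rewrite Hs.
- exact: rt_refl.
- apply: rt_trans (IH1 Hx) (IH2 _); apply: rst_trans Hx (rt_rst R1).
Qed.

Lemma W_strong u : symG -> strongly_connected src tgt (Wsg u).
Proof.
move=> S w1 w2 /= H1 H2.
have R12 : rst w1 w2 by apply: rst_trans (rst_sym _ _ _ _ H1) H2.
split; [apply: reach_in H1 _|apply: reach_in H2 _]; apply: rst_reach S _ => //.
exact: rst_sym.
Qed.

Lemma sg_le_refl (H : subg) : sg_le H H.
Proof. by split. Qed.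

Lemma sg_le_trans (H1 H2 H3 : subg) : sg_le H1 H2 -> sg_le H2 H3 -> sg_le H1 H3.
Proof. move=> [a b] [c d]; split => x Hx; [exact: c (a x Hx)|exact: d (b x Hx)]. Qed.

Definition charW (H : subg) := is_subgraph src tgt H /\
  ((exists u, sg_le H (Wsg u) /\ sg_le (Wsg u) H) \/ (I -> False)).

Lemma comp_char (P : subg -> Prop) : symG ->
  (forall H, P H -> weakly_connected src tgt H) -> (forall u, P (Wsg u)) ->
  (forall H H', sg_le H H' -> sg_le H' H -> P H -> P H') ->
  (forall H, (forall v, ~ sg_v H v) -> P H) ->
  forall H, maximal_subgraph src tgt P H <-> charW H.
Proof.
move=> S Pa Pb Pc Pd H; split.
  move=> [Hsub [PH Hmax]]; split => //.
  case: (classic (exists u, sg_v H u)) => [[u Hu]|Nu].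
    have HW : sg_le H (Wsg u).
      have Vw : forall w, sg_v H w -> rst u w.
        move=> w Hw; apply: rst_mono (Pa _ PH u w Hu Hw); exact: adj_in_adj.
      split => //= e He; apply: Vw; exact: (Hsub e He).1.
    left; exists u; split => //; exact: Hmax (@Wsub u) (Pb u) HW.
  right => u; have HW : sg_le H (Wsg u).
    split => [v Hv|e He]; exfalso; apply: Nu; [by exists v|exists (src e); exact: (Hsub e He).1].
  have [Lv _] := Hmax (Wsg u) (@Wsub u) (Pb u) HW.
  apply: Nu; exists u; apply: Lv; exact: rst_refl.
move=> [Hsub C]; split => //; split.
  case: C => [[u [L1 L2]]|N]; first exact: Pc (Pb u).
  apply: Pd => v _; exact: N v.
move=> H' Hs' P' L; case: C => [[u [L1 L2]]|N].
  apply: (sg_le_trans (H2 := Wsg u)); last exact: L2.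
  apply: G_max => //; first exact: Pa.
  exact: sg_le_trans L2 L.
split => [v _|e _]; exfalso; [exact: N v|exact: N (src e)].
Qed.

Lemma weak_of_uni H : unilaterally_connected src tgt H -> weakly_connected src tgt H.
Proof.
move=> U a b Ha Hb; case: (U a b Ha Hb) => R; first exact: rt_rst.
apply: rst_sym; exact: rt_rst.
Qed.

Lemma uni_of_strong H : strongly_connected src tgt H -> unilaterally_connected src tgt H.
Proof. move=> S a b Ha Hb; left; exact: (S a b Ha Hb).1. Qed.

Lemma char_weak : symG -> forall H, weak_component src tgt H <-> charW H.
Proof.
move=> S; apply: comp_char => //.
- exact: G_weak.
- move=> H H' [_ L1] [L2 _] W a b Ha Hb; apply: rst_mono (W a b (L2 _ Ha) (L2 _ Hb)).
  move=> x y; exact: adj_in_mono.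
- by move=> H N a b Ha; case: (N a).
Qed.

Lemma char_uni : symG -> forall H, unilateral_component src tgt H <-> charW H.
Proof.
move=> S; apply: comp_char => //.
- exact: weak_of_uni.
- move=> u; apply: uni_of_strong; exact: W_strong.
- move=> H H' [_ L1] [L2 _] W a b Ha Hb.
  case: (W a b (L2 _ Ha) (L2 _ Hb)) => R; [left|right]; apply: rt_mono R;
  move=> x y; exact: adj_in_mono.
- by move=> H N a b Ha; case: (N a).
Qed.

Lemma char_strong : symG -> forall H, strong_component src tgt H <-> charW H.
Proof.
move=> S; apply: comp_char => //.
- move=> H W; apply: weak_of_uni; exact: uni_of_strong.
- move=> u; exact: W_strong.
- move=> H H' [_ L1] [L2 _] W a b Ha Hb.
  have [R1 R2] := W a b (L2 _ Ha) (L2 _ Hb).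
  split; apply: rt_mono; try eassumption; move=> x y; exact: adj_in_mono.
- by move=> H N a b Ha; case: (N a).
Qed.

Lemma reach_of_rt_in (H : subg) a b : clos_refl_trans I (adj_in src tgt H) a b -> reach a b.
Proof. apply: rt_mono; exact: adj_in_adj. Qed.

Lemma item_i : symG <-> (forall H, weak_component src tgt H -> strong_component src tgt H).
Proof.
split; first by move=> S H; rewrite char_weak // char_strong.
move=> Hi a b R.
have [_ [Sc _]] := Hi _ (Wweak a).
have [_ R2] := Sc a b (rst_refl _ _ a) (rt_rst R).
exact: reach_of_rt_in R2.
Qed.

Lemma item_iii : symG <-> (forall H,
  (weak_component src tgt H <-> unilateral_component src tgt H) /\
  (unilateral_component src tgt H <-> strong_component src tgt H)).
Proof.
split; first by move=> S H; rewrite char_weak // char_uni // char_strong.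
move=> H3; apply/item_i => H W; apply/(H3 H).2; exact/(H3 H).1.
Qed.

Lemma item_iv : symG <-> ((forall v, exists H, strong_component src tgt H /\ sg_v H v) /\
     (forall e, exists H, strong_component src tgt H /\ sg_e H e)).
Proof.
split.
  move=> S; split.
    move=> v; exists (Wsg v); split; last exact: rst_refl.
    apply/char_strong => //; split; first exact: Wsub.
    left; exists v; split; exact: sg_le_refl.
  move=> e; exists (Wsg (src e)); split; last exact: rst_refl.
  apply/char_strong => //; split; first exact: Wsub.
  left; exists (src e); split; exact: sg_le_refl.
move=> [_ He] a b R; elim: R => [x y [e [Hs Ht]]|x|x y z _ IH1 _ IH2].
- have [H [[Hsub [Sc _]] HeH]] := He e.
  have [Vs Vt] := Hsub e HeH.
  have [_ R2] := Sc _ _ Vs Vt; rewrite -Hs -Ht; exact: reach_of_rt_in R2.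
- exact: rt_refl.
- exact: rt_trans IH2 IH1.
Qed.

Lemma bad_arrow a b : reach a b -> ~ reach b a -> exists e, ~ reach (tgt e) (src e).
Proof.
move=> /clos_rt_rt1n_iff R; elim: R => [x|x y z [e [Hs Ht]] R IH] N.
  by case: N; exact: rt_refl.
case: (classic (reach y x)) => Ryx; last by exists e; rewrite Hs Ht.
apply: IH => Rzy; apply: N; exact: rt_trans Rzy Ryx.
Qed.

Definition brel (T0 : Type) (P : T0 -> T0 -> Prop) : rel T0 :=
  fun x y => if excluded_middle_informative (P x y) then true else false.

Lemma brelP (T0 : Type) (P : T0 -> T0 -> Prop) x y : brel P x y <-> P x y.
Proof. rewrite /brel; by destruct (excluded_middle_informative (P x y)). Qed.

Lemma uni_exists (H0 : subg) : is_subgraph src tgt H0 -> unilaterally_connected src tgt H0 ->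
  exists H, unilateral_component src tgt H /\ sg_le H0 H.
Proof.
move=> S0 U0.
pose T0 := {H : subg | is_subgraph src tgt H /\ unilaterally_connected src tgt H /\ sg_le H0 H}.
pose t0 : T0 := exist _ H0 (conj S0 (conj U0 (sg_le_refl H0))).
pose R := brel (fun x y : T0 => sg_le (proj1_sig x) (proj1_sig y)).
have [| | |t Ht] := @classical_sets.ZL_preorder T0 t0 R.
- move=> t; apply/brelP; exact: sg_le_refl.
- move=> r s t /brelP H1 /brelP H2; apply/brelP; exact: sg_le_trans H1 H2.
- move=> A Tot.
  pose Ub := Subgraph (fun v => sg_v H0 v \/ exists s, A s /\ sg_v (proj1_sig s) v)
                      (fun e => sg_e H0 e \/ exists s, A s /\ sg_e (proj1_sig s) e).
  have inS : forall s, A s -> forall a b, sg_v (proj1_sig s) a -> sg_v (proj1_sig s) b ->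
      clos_refl_trans I (adj_in src tgt Ub) a b \/ clos_refl_trans I (adj_in src tgt Ub) b a.
    move=> s As a b Ha Hb; have [_ [Us _]] := proj2_sig s.
    case: (Us a b Ha Hb) => Rr; [left|right]; apply: rt_mono Rr => x y;
    apply: adj_in_mono => e He /=; right; by exists s.
  have H0s : forall s : T0, sg_le H0 (proj1_sig s) by move=> s; have [_ [_ L]] := proj2_sig s.
  have UbSub : is_subgraph src tgt Ub.
    move=> e [He|[s [As He]]].
      by have [? ?] := S0 e He; split; left.
    have [Ss _] := proj2_sig s; have [? ?] := Ss e He; split; right; by exists s.
  have UbUni : unilaterally_connected src tgt Ub.
    move=> a b [ha|[s1 [A1 V1]]] [hb|[s2 [A2 V2]]].
    - case: (U0 a b ha hb) => Rr; [left|right]; apply: rt_mono Rr => x y;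
      apply: adj_in_mono => e He /=; by left.
    - by apply: (inS s2 A2) => //; apply: (H0s s2).1.
    - by apply: (inS s1 A1) => //; apply: (H0s s1).1.
    - case: (Tot s1 s2 A1 A2) => /brelP [Lv _].
        by apply: (inS s2 A2) => //; apply: Lv.
      by apply: (inS s1 A1) => //; apply: Lv.
  exists (exist _ Ub (conj UbSub (conj UbUni (conj (fun v h => or_introl h) (fun e h => or_introl h))))).
  move=> s As; apply/brelP; split => /= [v Hv|e He]; right; by exists s.
move: t Ht => [H [Hs [Hu Hle]]] Hmax.
exists H; split => //; split => //; split => // H' Hs' Hu' L.
have := Hmax (exist _ H' (conj Hs' (conj Hu' (sg_le_trans Hle L)))).
rewrite /= => /(_ (proj2 (brelP _ _ _) L)) /brelP; by [].
Qed.

Lemma item_ii : symG <-> (forall H, unilateral_component src tgt H -> strong_component src tgt H).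
Proof.
split; first by move=> S H; rewrite char_uni // char_strong.
move=> Hii a b R; apply: NNPP => N.
have [e Ne] := bad_arrow R N.
pose H0 := Subgraph (fun w => w = src e \/ w = tgt e) (fun e' => e' = e).
have S0 : is_subgraph src tgt H0 by move=> e' /= ->; split; [left|right].
have St : clos_refl_trans I (adj_in src tgt H0) (src e) (tgt e).
  apply: rt_step; by exists e.
have U0 : unilaterally_connected src tgt H0.
  move=> x y /= [->|->] [->|->]; try (left; exact: rt_refl).
    by left.
  by right.
have [H [Hu [Lv _]]] := uni_exists S0 U0.
have [_ [Sc _]] := Hii H Hu.
have [_ R2] := Sc _ _ (Lv _ (or_introl erefl)) (Lv _ (or_intror erefl)).
exact: Ne (reach_of_rt_in R2).
Qed.

End G.

Lemma g_levitzki_of_nil (X : Type) (M G : X -> Prop) z ad op gm :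
  g_nil_zero M G z ad op gm -> g_levitzki_zero M G z ad op gm.
Proof. move=> H U IU HF; apply: (H U IU) => x Ux; apply: HF => y [<-|[]] //. Qed.

Theorem theorem3p7 (k : fieldType) (I E : Type) (src tgt : E -> I) (rk : radical_kind) :
  [<->
    (* (i) *)
    (forall H, weak_component src tgt H -> strong_component src tgt H);
    (* (ii) *)
    (forall H, unilateral_component src tgt H -> strong_component src tgt H);
    (* (iii) *)
    (forall H, (weak_component src tgt H <-> unilateral_component src tgt H) /\
               (unilateral_component src tgt H <-> strong_component src tgt H));
    (* (iv) *)
    ((forall v, exists H, strong_component src tgt H /\ sg_v H v) /\
     (forall e, exists H, strong_component src tgt H /\ sg_e H e));
    (* (v) *)
    ~ has_regular_path src tgt;
    (* (vi) *)
    (forall i j,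
       (forall f, A_sub (k:=k) src tgt i j f -> f = @pa_zero k I E) <->
       (forall f, A_sub (k:=k) src tgt j i f -> f = @pa_zero k I E));
    (* (vii) *)
    pa_direct_sum_of_primes k src tgt;
    (* (viii) *)
    r_semiprime (in_kD (k:=k) src tgt) (@pa_zero k I E) (pa_mul tgt);
    (* (ix) *)
    (forall i j, g_semiprime (A_sub (k:=k) src tgt i j) (A_sub src tgt j i)
                   (@pa_zero k I E) (pa_gmul tgt));
    (* (x) *)
    (forall i j, gamma_radical_zero rk (A_sub (k:=k) src tgt i j) (A_sub src tgt j i)
                   (@pa_zero k I E) (@pa_add k I E) (@pa_opp k I E) (pa_gmul tgt));
    (* (xi) *)
    ring_radical_zero rk (in_kD (k:=k) src tgt) (@pa_zero k I E) (@pa_add k I E)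
      (@pa_opp k I E) (pa_mul tgt)
  ].
Proof.
have e1 := item_i src tgt.
have e2 := item_ii src tgt.
have e3 := item_iii src tgt.
have e4 := item_iv src tgt.
have hS : symG src tgt <-> symR src tgt by [].
have e5 : symG src tgt <-> ~ has_regular_path src tgt by rewrite hS; exact: reg_iff.
have e6 := vi_iff k src tgt; rewrite -hS in e6.
have bad : ~ symG src tgt -> exists i j l0, is_walk src tgt i l0 /\ walk_end tgt i l0 = j /\
  ~ reach src tgt j i by rewrite hS; exact: nsym_ex.
have e8 : symG src tgt <-> r_semiprime (in_kD (k:=k) src tgt) (@pa_zero k I E) (pa_mul tgt).
  split; first by move=> S; exact: semiprime_sym.
  move=> H; apply: NNPP => /bad [i [j [l0 [W0 [E0 N]]]]].
  exact: bad_semiprime N l0 W0 E0 H.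
have e7 : symG src tgt <-> pa_direct_sum_of_primes k src tgt.
  split; first by move=> S; exact: dsum_sym.
  by move=> /dsum_semiprime /e8.
have e9 : symG src tgt <-> (forall i j, g_semiprime (A_sub (k:=k) src tgt i j) (A_sub src tgt j i)
                   (@pa_zero k I E) (pa_gmul tgt)).
  split; first by move=> S; exact: gsemi_sym.
  move=> H; apply: NNPP => /bad [i [j [l0 [W0 [E0 N]]]]].
  exact: bad_gsemi N l0 W0 E0 (H i j).
have e10 : symG src tgt <-> (forall i j, gamma_radical_zero rk (A_sub (k:=k) src tgt i j) (A_sub src tgt j i)
                   (@pa_zero k I E) (@pa_add k I E) (@pa_opp k I E) (pa_gmul tgt)).
  split.
    move=> S i j; case: rk => /=.
    - exact: gbaer_sym.
    - exact: gnil_sym.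
    - apply: g_levitzki_of_nil; exact: gnil_sym.
    - exact: gjac_sym.
  move=> H; apply: NNPP => /bad [i [j [l0 [W0 [E0 N]]]]].
  exact: bad_gamma N l0 W0 E0 rk (H i j).
have e11 : symG src tgt <-> ring_radical_zero rk (in_kD (k:=k) src tgt) (@pa_zero k I E) (@pa_add k I E)
      (@pa_opp k I E) (pa_mul tgt).
  split.
    move=> S; destruct rk; simpl.
    - exact: baer_sym.
    - exact: nil_sym.
    - apply: levitzki_of_nil; exact: nil_sym.
    - exact: jac_sym.
  move=> H; apply: NNPP => /bad [i [j [l0 [W0 [E0 N]]]]].
  exact: bad_ring N l0 W0 E0 rk H.
tfae.
- by move=> /e1 /e2.
- by move=> /e2 /e3.
- by move=> /e3 /e4.
- by move=> /e4 /e5.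
- by move=> /e5 /e6.
- by move=> /e6 /e7.
- by move=> /e7 /e8.
- by move=> /e8 /e9.
- by move=> /e9 /e10.
- by move=> /e10 /e11.
- by move=> /e11 /e1.
Qed.
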